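(* The logics $\mathsf{E}$, $\mathsf{M}$, $\mathsf{MC}$, $\mathsf{EN}$, $\mathsf{MN}$, $\mathsf{K}$, $\mathsf{CE}$, $\mathsf{CM}$, $\mathsf{CMC}$, $\mathsf{CEN}$, $\mathsf{CMN}$, $\mathsf{CK}$ and $\mathsf{CKID}$ have the uniform Lyndon interpolation property (ULIP), and hence also the uniform interpolation property (UIP) and the Lyndon interpolation property (LIP).
   Context: Formulas of $\mathcal{L}_\Box$: atoms, $\bot$, $\wedge,\vee,\to$, unary $\Box$; of $\mathcal{L}_\triangleright$: atoms, $\bot$, $\wedge,\vee,\to$, binary $\triangleright$. $\top:=\bot\to\bot$, $\neg A:=A\to\bot$. Modal logics (in $\mathcal{L}_\Box$): $\mathsf{E}$ is the smallest set containing all instances of classical tautologies and closed under modus ponens and the rule: from $\phi\leftrightarrow\psi$ infer $\Box\phi\leftrightarrow\Box\psi$. Axiom schemes: (M) $\Box(\phi\wedge\psi)\to\Box\phi\wedge\Box\psi$; (C) $\Box\phi\wedge\Box\psi\to\Box(\phi\wedge\psi)$; (N) $\Box\top$. $\mathsf{EN}=\mathsf{E}+(N)$, $\mathsf{M}=\mathsf{E}+(M)$, $\mathsf{MN}=\mathsf{M}+(N)$, $\mathsf{MC}=\mathsf{M}+(C)$, $\mathsf{K}=\mathsf{MC}+(N)$. Conditional logics (in $\mathcal{L}_\triangleright$): $\mathsf{CE}$ is the smallest set containing all instances of classical tautologies and closed under modus ponens and the rule: from $\phi_0\leftrightarrow\phi_1$ and $\psi_0\leftrightarrow\psi_1$ infer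 $(\phi_0\triangleright\psi_0)\to(\phi_1\triangleright\psi_1)$. Axiom schemes: (CM) $(\phi\triangleright\psi\wedge\theta)\to(\phi\triangleright\psi)\wedge(\phi\triangleright\theta)$; (CC) $(\phi\triangleright\psi)\wedge(\phi\triangleright\theta)\to(\phi\triangleright\psi\wedge\theta)$; (CN) $\phi\triangleright\top$; (ID) $\phi\triangleright\phi$. $\mathsf{CEN}=\mathsf{CE}+(CN)$, $\mathsf{CM}=\mathsf{CE}+(CM)$, $\mathsf{CMN}=\mathsf{CM}+(CN)$, $\mathsf{CMC}=\mathsf{CM}+(CC)$, $\mathsf{CK}=\mathsf{CMC}+(CN)$, $\mathsf{CKID}=\mathsf{CK}+(ID)$. Positive/negative variables: $V^+(p)=\{p\}$, $V^-(p)=\varnothing$; $V^\pm(\bot)=V^\pm(\top)=\varnothing$; $V^\pm(\phi\odot\psi)=V^\pm(\phi)\cup V^\pm(\psi)$ for $\odot\in\{\wedge,\vee\}$; $V^+(\phi\to\psi)=V^-(\phi)\cup V^+(\psi)$, $V^-(\phi\to\psi)=V^+(\phi)\cup V^-(\psi)$; $V^\pm(\Box\phi)=V^\pm(\phi)$; $V^+(\phi\triangleright\psi)=V^-(\phi)\cup V^+(\psi)$, $V^-(\phi\triangleright\psi)=V^+(\phi)\cup V^-(\psi)$; $V=V^+\cup V^-$. $p^\circ$-free: $p\notin V^\circ(\cdot)$. ULIP for a logic $L$: for every formula $\phi$, atom $p$, $\circ\in\{+,-\}$ there are $p^\circ$-free formulas $\forall^\circ p\,\phi$, $\exists^\circ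 p\,\phi$ with $V^\dagger(\cdot)\subseteq V^\dagger(\phi)$ for both $\dagger\in\{+,-\}$, such that $L\vdash\forall^\circ p\,\phi\to\phi$; for every $p^\circ$-free $\psi$, $L\vdash\psi\to\phi$ implies $L\vdash\psi\to\forall^\circ p\,\phi$; $L\vdash\phi\to\exists^\circ p\,\phi$; for every $p^\circ$-free $\psi$, $L\vdash\phi\to\psi$ implies $L\vdash\exists^\circ p\,\phi\to\psi$. UIP: same with polarities omitted ($p$-free, $V$). LIP: if $L\vdash\phi\to\psi$ there is $\theta$ with $V^\dagger(\theta)\subseteq V^\dagger(\phi)\cap V^\dagger(\psi)$ for both $\dagger$, $L\vdash\phi\to\theta$, $L\vdash\theta\to\psi$. *)

(* Defs.v *)
From Stdlib Require Import Bool Arith.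

(* Propositional formulas (used to define instance of a classical    *)
(* tautology: a formula obtained from a tautology by substituting     *)
(* arbitrary formulas of the object language for its atoms).          *)
Inductive pform : Type :=
| PAtom (n : nat)
| PBot
| PAnd (a b : pform)
| POr (a b : pform)
| PImp (a b : pform).

Fixpoint peval (v : nat -> bool) (f : pform) : bool :=
  match f with
  | PAtom n => v n
  | PBot => false
  | PAnd a b => peval v a && peval v b
  | POr a b => peval v a || peval v b
  | PImp a b => implb (peval v a) (peval v b)
  end.

Definition tautology (f : pform) : Prop := forall v, peval v f = true.

(* [occ true p f = true]  <->  p ∈ V^+(f);                            *)
(* [occ false p f = true] <->  p ∈ V^-(f).                            *)
(* A logic is given as its set of theorems L : F -> Prop.             *)
Definition vars {F : Type} (occ : bool -> nat -> F -> bool) (p : nat) (f : F) : bool :=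
  occ true p f || occ false p f.

Definition ULIP_gen {F : Type} (imp : F -> F -> F) (occ : bool -> nat -> F -> bool)
  (L : F -> Prop) : Prop :=
  forall (phi : F) (p : nat) (s : bool),
    (exists A : F,
        occ s p A = false /\
        (forall (t : bool) (q : nat), occ t q A = true -> occ t q phi = true) /\
        L (imp A phi) /\
        (forall psi : F, occ s p psi = false -> L (imp psi phi) -> L (imp psi A))) /\
    (exists E : F,
        occ s p E = false /\
        (forall (t : bool) (q : nat), occ t q E = true -> occ t q phi = true) /\
        L (imp phi E) /\
        (forall psi : F, occ s p psi = false -> L (imp phi psi) -> L (imp E psi))).

Definition UIP_gen {F : Type} (imp : F -> F -> F) (occ : bool -> nat -> F -> bool)
  (L : F -> Prop) : Prop :=
  forall (phi : F) (p : nat),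
    (exists A : F,
        vars occ p A = false /\
        (forall q : nat, vars occ q A = true -> vars occ q phi = true) /\
        L (imp A phi) /\
        (forall psi : F, vars occ p psi = false -> L (imp psi phi) -> L (imp psi A))) /\
    (exists E : F,
        vars occ p E = false /\
        (forall q : nat, vars occ q E = true -> vars occ q phi = true) /\
        L (imp phi E) /\
        (forall psi : F, vars occ p psi = false -> L (imp phi psi) -> L (imp E psi))).

Definition LIP_gen {F : Type} (imp : F -> F -> F) (occ : bool -> nat -> F -> bool)
  (L : F -> Prop) : Prop :=
  forall phi psi : F, L (imp phi psi) ->
    exists theta : F,
      (forall (t : bool) (q : nat), occ t q theta = true ->
          occ t q phi = true /\ occ t q psi = true) /\
      L (imp phi theta) /\ L (imp theta psi).

Inductive mform : Type :=
| MAtom (n : nat)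
| MBot
| MAnd (a b : mform)
| MOr (a b : mform)
| MImp (a b : mform)
| MBox (a : mform).

Definition MTop : mform := MImp MBot MBot.
Definition MIff (a b : mform) : mform := MAnd (MImp a b) (MImp b a).

Fixpoint msubst (sg : nat -> mform) (f : pform) : mform :=
  match f with
  | PAtom n => sg n
  | PBot => MBot
  | PAnd a b => MAnd (msubst sg a) (msubst sg b)
  | POr a b => MOr (msubst sg a) (msubst sg b)
  | PImp a b => MImp (msubst sg a) (msubst sg b)
  end.

(* polarized occurrences: s = true is V^+, s = false is V^- *)
Fixpoint mocc (s : bool) (p : nat) (f : mform) : bool :=
  match f with
  | MAtom q => s && Nat.eqb p q
  | MBot => false
  | MAnd a b => mocc s p a || mocc s p b
  | MOr a b => mocc s p a || mocc s p b
  | MImp a b => mocc (negb s) p a || mocc s p b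
  | MBox a => mocc s p a
  end.

Inductive mprov (Ax : mform -> Prop) : mform -> Prop :=
| mp_taut (t : pform) (sg : nat -> mform) : tautology t -> mprov Ax (msubst sg t)
| mp_ax (f : mform) : Ax f -> mprov Ax f
| mp_mp (f g : mform) : mprov Ax (MImp f g) -> mprov Ax f -> mprov Ax g
| mp_re (f g : mform) : mprov Ax (MIff f g) -> mprov Ax (MIff (MBox f) (MBox g)).

Definition axM (f : mform) : Prop :=
  exists a b, f = MImp (MBox (MAnd a b)) (MAnd (MBox a) (MBox b)).
Definition axC (f : mform) : Prop :=
  exists a b, f = MImp (MAnd (MBox a) (MBox b)) (MBox (MAnd a b)).
Definition axN (f : mform) : Prop := f = MBox MTop.

Inductive modal_logic : Type := LE | LM | LMC | LEN | LMN | LK.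

Definition modal_axioms (L : modal_logic) (f : mform) : Prop :=
  match L with
  | LE => False
  | LM => axM f
  | LMC => axM f \/ axC f
  | LEN => axN f
  | LMN => axM f \/ axN f
  | LK => axM f \/ axC f \/ axN f
  end.

Definition mtheorems (L : modal_logic) : mform -> Prop := mprov (modal_axioms L).

Definition ULIP_m (L : mform -> Prop) : Prop := ULIP_gen MImp mocc L.
Definition UIP_m (L : mform -> Prop) : Prop := UIP_gen MImp mocc L.
Definition LIP_m (L : mform -> Prop) : Prop := LIP_gen MImp mocc L.

Inductive cform : Type :=
| CAtom (n : nat)
| CBot
| CAnd (a b : cform)
| COr (a b : cform)
| CImp (a b : cform)
| CCond (a b : cform).   (* a ▷ b *)

Definition CTop : cform := CImp CBot CBot.
Definition CIff (a b : cform) : cform := CAnd (CImp a b) (CImp b a).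

Fixpoint csubst (sg : nat -> cform) (f : pform) : cform :=
  match f with
  | PAtom n => sg n
  | PBot => CBot
  | PAnd a b => CAnd (csubst sg a) (csubst sg b)
  | POr a b => COr (csubst sg a) (csubst sg b)
  | PImp a b => CImp (csubst sg a) (csubst sg b)
  end.

Fixpoint cocc (s : bool) (p : nat) (f : cform) : bool :=
  match f with
  | CAtom q => s && Nat.eqb p q
  | CBot => false
  | CAnd a b => cocc s p a || cocc s p b
  | COr a b => cocc s p a || cocc s p b
  | CImp a b => cocc (negb s) p a || cocc s p b
  | CCond a b => cocc (negb s) p a || cocc s p b
  end.

Inductive cprov (Ax : cform -> Prop) : cform -> Prop :=
| cp_taut (t : pform) (sg : nat -> cform) : tautology t -> cprov Ax (csubst sg t)
| cp_ax (f : cform) : Ax f -> cprov Ax f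
| cp_mp (f g : cform) : cprov Ax (CImp f g) -> cprov Ax f -> cprov Ax g
| cp_re (a0 a1 b0 b1 : cform) :
    cprov Ax (CIff a0 a1) -> cprov Ax (CIff b0 b1) ->
    cprov Ax (CImp (CCond a0 b0) (CCond a1 b1)).

Definition axCM (f : cform) : Prop :=
  exists a b c, f = CImp (CCond a (CAnd b c)) (CAnd (CCond a b) (CCond a c)).
Definition axCC (f : cform) : Prop :=
  exists a b c, f = CImp (CAnd (CCond a b) (CCond a c)) (CCond a (CAnd b c)).
Definition axCN (f : cform) : Prop := exists a, f = CCond a CTop.
Definition axID (f : cform) : Prop := exists a, f = CCond a a.

Inductive cond_logic : Type := LCE | LCM | LCMC | LCEN | LCMN | LCK | LCKID.

Definition cond_axioms (L : cond_logic) (f : cform) : Prop :=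
  match L with
  | LCE => False
  | LCM => axCM f
  | LCMC => axCM f \/ axCC f
  | LCEN => axCN f
  | LCMN => axCM f \/ axCN f
  | LCK => axCM f \/ axCC f \/ axCN f
  | LCKID => axCM f \/ axCC f \/ axCN f \/ axID f
  end.

Definition ctheorems (L : cond_logic) : cform -> Prop := cprov (cond_axioms L).

Definition ULIP_c (L : cform -> Prop) : Prop := ULIP_gen CImp cocc L.
Definition UIP_c (L : cform -> Prop) : Prop := UIP_gen CImp cocc L.
Definition LIP_c (L : cform -> Prop) : Prop := LIP_gen CImp cocc L.

(* Main.v *)
Require Import Defs.
From Stdlib Require Import List Bool Arith Lia Classical ClassicalEpsilon.
Import ListNotations.


Definition xm (P : Prop) : {P} + {~P} := excluded_middle_informative P.

Definition cform_eq_dec : forall x y : cform, {x = y} + {x <> y}.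
Proof. decide equality; apply Nat.eq_dec. Defined.

Fixpoint ceval (va : nat -> bool) (vc : cform -> cform -> bool) (f : cform) : bool :=
  match f with
  | CAtom n => va n
  | CBot => false
  | CAnd a b => ceval va vc a && ceval va vc b
  | COr a b => ceval va vc a || ceval va vc b
  | CImp a b => implb (ceval va vc a) (ceval va vc b)
  | CCond a b => vc a b
  end.

Fixpoint gens (f : cform) : list cform :=
  match f with
  | CAtom n => [CAtom n]
  | CBot => []
  | CAnd a b | COr a b | CImp a b => gens a ++ gens b
  | CCond a b => [CCond a b]
  end.

Fixpoint idx (g : cform) (l : list cform) : nat :=
  match l with
  | [] => 0
  | h :: t => if cform_eq_dec g h then 0 else S (idx g t)
  end.

Lemma nth_idx g l : In g l -> nth (idx g l) l CBot = g.
Proof.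
  induction l as [|h t IH]; simpl; [tauto|].
  destruct (cform_eq_dec g h); [subst; auto|].
  intros [H|H]; [congruence|auto].
Qed.

Fixpoint skel (G : list cform) (f : cform) : pform :=
  match f with
  | CAtom n => PAtom (idx (CAtom n) G)
  | CBot => PBot
  | CAnd a b => PAnd (skel G a) (skel G b)
  | COr a b => POr (skel G a) (skel G b)
  | CImp a b => PImp (skel G a) (skel G b)
  | CCond a b => PAtom (idx (CCond a b) G)
  end.

Lemma skel_subst G f : incl (gens f) G -> csubst (fun n => nth n G CBot) (skel G f) = f.
Proof.
  induction f; simpl; intros H;
    try (rewrite IHf1, IHf2 by (intros x Hx; apply H; apply in_or_app; auto); reflexivity);
    try reflexivity; apply nth_idx; apply H; simpl; auto.
Qed.

Lemma skel_eval G f u :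
  peval u (skel G f) = ceval (fun n => u (idx (CAtom n) G)) (fun a b => u (idx (CCond a b) G)) f.
Proof. induction f; simpl; try rewrite IHf1, IHf2; reflexivity. Qed.

Lemma ceval_csubst va vc sg t :
  ceval va vc (csubst sg t) = peval (fun n => ceval va vc (sg n)) t.
Proof. induction t; simpl; try rewrite IHt1, IHt2; reflexivity. Qed.

Section Prov.
Variable Ax : cform -> Prop.
Notation prov := (cprov Ax).

Lemma TC f : (forall va vc, ceval va vc f = true) -> prov f.
Proof.
  intros H. rewrite <- (skel_subst (gens f) f) by (intros x; auto).
  apply cp_taut. intro u. rewrite skel_eval. apply H.
Qed.

Lemma prov_sem (Hs : list cform) (c : cform) :
  Forall prov Hs ->
  (forall va vc, Forall (fun h => ceval va vc h = true) Hs -> ceval va vc c = true) ->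
  prov c.
Proof.
  revert c; induction Hs as [|h t IH]; intros c HP HS.
  - apply TC; intros; apply HS; constructor.
  - inversion HP; subst.
    apply (cp_mp _ h c); auto.
    apply IH; auto. intros va vc Ht. simpl.
    destruct (ceval va vc h) eqn:E; simpl; auto.
Qed.

Lemma prov_sem1 a c : prov a ->
  (forall va vc, ceval va vc a = true -> ceval va vc c = true) -> prov c.
Proof. intros. apply (prov_sem [a]); auto. intros va vc F; inversion F; auto. Qed.

Lemma prov_sem2 a b c : prov a -> prov b ->
  (forall va vc, ceval va vc a = true -> ceval va vc b = true -> ceval va vc c = true) -> prov c.
Proof. intros. apply (prov_sem [a;b]); auto. intros va vc F; inversion F as [|? ? ? F2]; inversion F2; auto. Qed.

Lemma prov_sem3 a b d c : prov a -> prov b -> prov d ->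
  (forall va vc, ceval va vc a = true -> ceval va vc b = true -> ceval va vc d = true -> ceval va vc c = true) -> prov c.
Proof. intros. apply (prov_sem [a;b;d]); auto.
  intros va vc F; inversion F as [|? ? ? F2]; inversion F2 as [|? ? ? F3]; inversion F3; auto. Qed.

End Prov.


Definition bigand (l : list cform) : cform := fold_right CAnd CTop l.
Definition bigor (l : list cform) : cform := fold_right COr CBot l.
Definition cneg (a : cform) : cform := CImp a CBot.
Definition condf (y : cform * cform) : cform := CCond (fst y) (snd y).

Lemma bigand_eval va vc l : ceval va vc (bigand l) = forallb (ceval va vc) l.
Proof. induction l; simpl; auto. rewrite IHl; auto. Qed.
Lemma bigor_eval va vc l : ceval va vc (bigor l) = existsb (ceval va vc) l.
Proof. induction l; simpl; auto. rewrite IHl; auto. Qed.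

Record params := mkP { mono : bool; lok : nat -> bool; idf : bool }.
Definition guard (P : params) (c X : cform) : cform := if idf P then CAnd c X else X.

Ltac crush :=
  let va := fresh "va" in let vc := fresh "vc" in
  intros va vc; unfold CIff, CTop, cneg, guard in *;
  repeat match goal with |- context [idf ?P] =>
     let bb := fresh "bb" in let Eb := fresh "Eb" in remember (idf P) as bb eqn:Eb; clear Eb; destruct bb end; simpl in *;
  unfold CIff, CTop, cneg in *; simpl in *;
  repeat (rewrite ?bigand_eval, ?bigor_eval, ?map_app, ?forallb_app, ?existsb_app in *);
  repeat match goal with H : ?x = _ |- _ => match type of x with bool => revert H end end;
  repeat (match goal with
          | |- context [idf ?P] => let bb := fresh "bb" in let Eb := fresh "Eb" in
                remember (idf P) as bb eqn:Eb; clear Eb; destruct bb; simpl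
          | |- context [ceval ?a ?b ?x] => destruct (ceval a b x)
          | |- context [forallb ?f ?l] => destruct (forallb f l)
          | |- context [existsb ?f ?l] => destruct (existsb f l)
          | |- context [?vc ?x ?y] => is_var vc; destruct (vc x y)
          end); simpl; intros; try discriminate; auto.

Fixpoint sublists {A} (l : list A) : list (list A) :=
  match l with
  | [] => [[]]
  | h :: t => map (cons h) (sublists t) ++ sublists t
  end.

Lemma filter_sublists {A} (f : A -> bool) l : In (filter f l) (sublists l).
Proof.
  induction l; simpl; auto. destruct (f a); apply in_or_app; [left; apply in_map|right]; auto.
Qed.

Lemma sublists_incl {A} (l m : list A) : In m (sublists l) -> incl m l.
Proof.
  revert m; induction l; simpl; intros m H.
  - destruct H as [<-|[]]; intros x [].
  - apply in_app_or in H as [H|H].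
    + apply in_map_iff in H as [m' [<- H]]. intros x [<-|Hx]; simpl; auto. right; apply (IHl m'); auto.
    + intros x Hx; right; apply (IHl m); auto.
Qed.

Fixpoint cpairs (f : cform) : list (cform * cform) :=
  match f with
  | CAtom _ | CBot => []
  | CAnd a b | COr a b | CImp a b => cpairs a ++ cpairs b
  | CCond a b => [(a, b)]
  end.

Lemma ceval_agree va vc1 vc2 f :
  (forall y, In y (cpairs f) -> vc1 (fst y) (snd y) = vc2 (fst y) (snd y)) ->
  ceval va vc1 f = ceval va vc2 f.
Proof.
  induction f; simpl; intros H; auto;
    try (rewrite IHf1, IHf2; auto; intros y Hy; apply H; apply in_or_app; auto).
  apply (H (f1, f2)); auto.
Qed.

Section Sem.
Variable Ax : cform -> Prop.
Variable P : params.
Notation prov := (cprov Ax).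

Definition Cond (S : list (cform * cform)) (c d : cform) : Prop :=
  lok P (length S) = true /\ (forall y, In y S -> prov (CIff (fst y) c)) /\
  prov (CImp (guard P c (bigand (map snd S))) d) /\
  (mono P = true \/ prov (CImp d (bigand (map snd S)))).

Definition resp (vc : cform -> cform -> bool) : Prop :=
  forall S c d, Cond S c d -> (forall y, In y S -> vc (fst y) (snd y) = true) -> vc c d = true.

Hypothesis HP1 : lok P 1 = true.
Hypothesis HPsum : forall lens, lok P (length lens) = true ->
  Forall (fun k => lok P k = true) lens -> lok P (list_sum lens) = true.

Lemma Cond_refl c d : Cond [(c, d)] c d.
Proof.
  repeat split; simpl; auto.
  - intros y [<-|[]]; apply TC; crush.
  - apply TC; crush.
  - right; apply TC; crush.
Qed.

Lemma CondTrans_aux (Pr : cform * cform -> Prop) c : forall S',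
  (forall y, In y S' -> prov (CIff (fst y) c)) ->
  (forall y, In y S' -> exists Sy, (forall z, In z Sy -> Pr z) /\ Cond Sy (fst y) (snd y)) ->
  exists S lens, (forall z, In z S -> Pr z) /\ length lens = length S' /\
    Forall (fun k => lok P k = true) lens /\ length S = list_sum lens /\
    (forall z, In z S -> prov (CIff (fst z) c)) /\
    prov (CImp (guard P c (bigand (map snd S))) (bigand (map snd S'))) /\
    (mono P = false -> prov (CImp (bigand (map snd S')) (bigand (map snd S)))).
Proof.
  induction S' as [|y t IH]; intros Hf Hw.
  - exists [], []; simpl; repeat split; auto; try (intros ? []).
    + apply TC; crush.
    + intros; apply TC; crush.
  - destruct (Hw y (or_introl eq_refl)) as [Sy [HSy [Hl [Hf' [Hg Hm]]]]].
    destruct IH as [S0 [lens0 [HP0 [HL0 [HF0 [HS0 [Hf0 [Hg0 Hm0]]]]]]]].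
    { intros; apply Hf; right; auto. }
    { intros; apply Hw; right; auto. }
    exists (Sy ++ S0), (length Sy :: lens0). simpl. repeat split.
    + intros z Hz; apply in_app_or in Hz as [Hz|Hz]; auto.
    + rewrite HL0; auto.
    + constructor; auto.
    + rewrite length_app, HS0; auto.
    + intros z Hz; apply in_app_or in Hz as [Hz|Hz]; auto.
      apply (prov_sem2 _ _ _ _ (Hf' z Hz) (Hf y (or_introl eq_refl))); crush.
    + apply (prov_sem3 _ _ _ _ _ Hg (Hf y (or_introl eq_refl)) Hg0); crush.
    + intros Hmf. destruct Hm as [Hm|Hm]; [congruence|].
      apply (prov_sem2 _ _ _ _ Hm (Hm0 Hmf)); crush.
Qed.

Lemma CondTrans (Pr : cform * cform -> Prop) S' c d :
  Cond S' c d ->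
  (forall y, In y S' -> exists Sy, (forall z, In z Sy -> Pr z) /\ Cond Sy (fst y) (snd y)) ->
  exists S, (forall z, In z S -> Pr z) /\ Cond S c d.
Proof.
  intros [Hl [Hf [Hg Hm]]] Hw.
  destruct (CondTrans_aux Pr c S' Hf Hw) as [S [lens [HPr [HL [HF [HS [Hf0 [Hg0 Hm0]]]]]]]].
  exists S; repeat split; auto.
  - rewrite HS; apply HPsum; auto; rewrite HL; auto.
  - apply (prov_sem2 _ _ _ _ Hg0 Hg); crush.
  - destruct (mono P) eqn:E; auto. right. destruct Hm as [Hm|Hm]; [discriminate|].
    apply (prov_sem2 _ _ _ _ Hm (Hm0 eq_refl)); crush.
Qed.

Hypothesis HAx : forall f, Ax f -> forall va vc, resp vc -> ceval va vc f = true.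

Lemma Cond_re a0 a1 b0 b1 : prov (CIff a0 a1) -> prov (CIff b0 b1) -> Cond [(a0, b0)] a1 b1.
Proof.
  intros H1 H2; repeat split; simpl; auto.
  - intros y [<-|[]]; auto.
  - apply (prov_sem1 _ _ _ H2); crush.
  - right; apply (prov_sem1 _ _ _ H2); crush.
Qed.

Lemma soundness f : prov f -> forall va vc, resp vc -> ceval va vc f = true.
Proof.
  induction 1; intros va vc Hr.
  - rewrite ceval_csubst; apply H.
  - apply HAx; auto.
  - specialize (IHcprov1 va vc Hr); specialize (IHcprov2 va vc Hr); simpl in *.
    rewrite IHcprov2 in IHcprov1; auto.
  - simpl. destruct (vc a0 b0) eqn:E; simpl; auto.
    apply (Hr [(a0, b0)]); [apply Cond_re; auto|].
    intros y [<-|[]]; auto.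
Qed.

Hypothesis HC : forall S c d, Cond S c d -> prov (CImp (bigand (map condf S)) (CCond c d)).

Lemma prov_bigand l : Forall prov l -> prov (bigand l).
Proof. intros H; apply (prov_sem _ l); auto. intros va vc F. rewrite bigand_eval.
  apply forallb_forall. intros x Hx. rewrite Forall_forall in F; auto. Qed.

Lemma forallb_incl {A} (f : A -> bool) l m : incl m l -> forallb f l = true -> forallb f m = true.
Proof. intros Hi H. apply forallb_forall; intros x Hx. rewrite forallb_forall in H; auto. Qed.

Definition Gam (B : list (cform * cform)) : cform :=
  bigand (flat_map (fun m => map (fun x =>
     if xm (exists S, incl S m /\ Cond S (fst x) (snd x))
     then CImp (bigand (map condf m)) (condf x) else CTop) B) (sublists B)).

Lemma Gam_prov B : prov (Gam B).
Proof.
  apply prov_bigand. apply Forall_forall. intros g Hg.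
  apply in_flat_map in Hg as [m [_ Hg]]. apply in_map_iff in Hg as [x [<- _]].
  destruct (xm _) as [[S [Hi HCd]]|_].
  - apply (prov_sem1 _ _ _ (HC _ _ _ HCd)). intros va vc. simpl. rewrite !bigand_eval.
    destruct (forallb (ceval va vc) (map condf m)) eqn:E; simpl; auto.
    rewrite (forallb_incl _ _ _ (incl_map condf Hi) E). simpl; auto.
  - apply TC; crush.
Qed.

Lemma completeness f : (forall va vc, resp vc -> ceval va vc f = true) -> prov f.
Proof.
  intros H. apply NNPP; intros Hn.
  set (B := cpairs f).
  assert (Hn2 : ~ prov (CImp (Gam B) f)).
  { intros Hp. apply Hn. apply (cp_mp _ _ _ Hp (Gam_prov B)). }
  assert (Hn3 : exists va vc, ceval va vc (CImp (Gam B) f) <> true).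
  { apply NNPP; intros Hc; apply Hn2; apply TC; intros va vc.
    apply NNPP; intros Hc2; apply Hc; eauto. }
  destruct Hn3 as [va [vc0 Hv]]. simpl in Hv.
  destruct (ceval va vc0 (Gam B)) eqn:EG; [|simpl in Hv; congruence].
  destruct (ceval va vc0 f) eqn:Ef; [simpl in Hv; congruence|]. clear Hv.
  set (T := filter (fun y => vc0 (fst y) (snd y)) B).
  set (vc := fun c d => if xm (exists S, incl S T /\ Cond S c d) then true else false).
  assert (Hr : resp vc).
  { intros S c d HCd Hall. unfold vc. destruct (xm _) as [_|Hno]; auto. exfalso; apply Hno.
    apply (CondTrans (fun z => In z T) S); auto.
    intros y Hy. specialize (Hall y Hy). unfold vc in Hall. destruct (xm _) as [Hex|]; [|discriminate].
    exact Hex. }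
  assert (Hag : forall y, In y B -> vc (fst y) (snd y) = vc0 (fst y) (snd y)).
  { intros y Hy. destruct (vc0 (fst y) (snd y)) eqn:E0.
    - unfold vc. destruct (xm _) as [_|Hno]; auto. exfalso; apply Hno.
      exists [y]. split.
      + intros z [<-|[]]. unfold T; apply filter_In; auto.
      + destruct y; apply Cond_refl.
    - unfold vc. destruct (xm _) as [[S [Hi HCd]]|]; auto. exfalso.
      unfold Gam in EG. rewrite bigand_eval, forallb_forall in EG.
      assert (Hin : In (if xm (exists S, incl S T /\ Cond S (fst y) (snd y))
                        then CImp (bigand (map condf T)) (condf y) else CTop)
                   (flat_map (fun m => map (fun x =>
                      if xm (exists S, incl S m /\ Cond S (fst x) (snd x))
                      then CImp (bigand (map condf m)) (condf x) else CTop) B) (sublists B))).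
      { apply in_flat_map. exists T. split; [apply filter_sublists|].
        apply (in_map (fun x => if xm (exists S, incl S T /\ Cond S (fst x) (snd x))
                      then CImp (bigand (map condf T)) (condf x) else CTop)); auto. }
      specialize (EG _ Hin). destruct (xm _) as [_|Hno]; [|apply Hno; eauto].
      simpl in EG. rewrite bigand_eval in EG.
      assert (Ht : forallb (ceval va vc0) (map condf T) = true).
      { apply forallb_forall. intros x Hx. apply in_map_iff in Hx as [z [<- Hz]].
        unfold T in Hz. apply filter_In in Hz as [_ Hz]. simpl; auto. }
      rewrite Ht in EG. simpl in EG. congruence. }
  specialize (H va vc Hr). rewrite (ceval_agree va vc vc0 f Hag) in H. congruence.
Qed.

End Sem.


Inductive gat : Type := GV (n : nat) | GC (a b : cform).
Definition gf (g : gat) : cform := match g with GV n => CAtom n | GC a b => CCond a b end.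
Definition clause := (list gat * list gat)%type.
Definition merge (x y : clause) : clause := (fst x ++ fst y, snd x ++ snd y).
Definition prodm (A B : list clause) : list clause := flat_map (fun x => map (merge x) B) A.

Fixpoint nf (f : cform) : list clause * list clause :=
  match f with
  | CAtom n => ([([], [GV n])], [([GV n], [])])
  | CBot => ([([], [])], [])
  | CAnd a b => (fst (nf a) ++ fst (nf b), prodm (snd (nf a)) (snd (nf b)))
  | COr a b => (prodm (fst (nf a)) (fst (nf b)), snd (nf a) ++ snd (nf b))
  | CImp a b => (prodm (snd (nf a)) (fst (nf b)), fst (nf a) ++ snd (nf b))
  | CCond a b => ([([], [GC a b])], [([GC a b], [])])
  end.

Definition ce va vc (x : clause) : bool :=
  negb (forallb (fun g => ceval va vc (gf g)) (fst x)) || existsb (fun g => ceval va vc (gf g)) (snd x).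
Definition de va vc (x : clause) : bool :=
  forallb (fun g => ceval va vc (gf g)) (fst x) && negb (existsb (fun g => ceval va vc (gf g)) (snd x)).

Lemma ce_merge va vc x y : ce va vc (merge x y) = ce va vc x || ce va vc y.
Proof. unfold ce, merge; simpl. rewrite forallb_app, existsb_app.
  destruct (forallb _ (fst x)), (forallb _ (fst y)), (existsb _ (snd x)), (existsb _ (snd y)); reflexivity. Qed.
Lemma de_merge va vc x y : de va vc (merge x y) = de va vc x && de va vc y.
Proof. unfold de, merge; simpl. rewrite forallb_app, existsb_app.
  destruct (forallb _ (fst x)), (forallb _ (fst y)), (existsb _ (snd x)), (existsb _ (snd y)); reflexivity. Qed.

Lemma forallb_prodm va vc A B : forallb (ce va vc) (prodm A B) = forallb (ce va vc) A || forallb (ce va vc) B.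
Proof.
  induction A as [|x A IH]; simpl; auto. rewrite forallb_app, IH.
  assert (H : forall B, forallb (ce va vc) (map (merge x) B) = ce va vc x || forallb (ce va vc) B).
  { induction B0; simpl; [destruct (ce va vc x); auto|]. rewrite ce_merge, IHB0.
    destruct (ce va vc x), (ce va vc a), (forallb (ce va vc) B0); auto. }
  rewrite H. destruct (ce va vc x), (forallb (ce va vc) A), (forallb (ce va vc) B); auto.
Qed.
Lemma existsb_prodm va vc A B : existsb (de va vc) (prodm A B) = existsb (de va vc) A && existsb (de va vc) B.
Proof.
  induction A as [|x A IH]; simpl; auto. rewrite existsb_app, IH.
  assert (H : forall B, existsb (de va vc) (map (merge x) B) = de va vc x && existsb (de va vc) B).
  { induction B0; simpl; [destruct (de va vc x); auto|]. rewrite de_merge, IHB0.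
    destruct (de va vc x), (de va vc a), (existsb (de va vc) B0); auto. }
  rewrite H. destruct (de va vc x), (existsb (de va vc) A), (existsb (de va vc) B); auto.
Qed.
Lemma ce_de va vc x : ce va vc x = negb (de va vc x).
Proof. unfold ce, de. destruct (forallb _ _), (existsb _ _); auto. Qed.
Lemma forallb_ce_de va vc A : forallb (ce va vc) A = negb (existsb (de va vc) A).
Proof. induction A; simpl; auto. rewrite IHA, ce_de. destruct (de va vc a), (existsb _ A); auto. Qed.

Lemma nf_eval va vc f : forallb (ce va vc) (fst (nf f)) = ceval va vc f /\
                        existsb (de va vc) (snd (nf f)) = ceval va vc f.
Proof.
  induction f; simpl.
  - unfold ce, de; simpl. destruct (va n); auto.
  - unfold ce; simpl; auto.
  - destruct IHf1 as [A1 B1], IHf2 as [A2 B2].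
    rewrite forallb_app, existsb_prodm, A1, A2, B1, B2; auto.
  - destruct IHf1 as [A1 B1], IHf2 as [A2 B2].
    rewrite forallb_prodm, existsb_app, A1, A2, B1, B2; auto.
  - destruct IHf1 as [A1 B1], IHf2 as [A2 B2].
    rewrite forallb_prodm, existsb_app, (forallb_ce_de va vc (snd (nf f1))), B1, A2, B2.
    assert (E : existsb (de va vc) (fst (nf f1)) = negb (ceval va vc f1)).
    { rewrite <- A1, forallb_ce_de, negb_involutive; auto. }
    rewrite E. destruct (ceval va vc f1), (ceval va vc f2); auto.
  - unfold ce, de; simpl. destruct (vc f1 f2); auto.
Qed.

Definition PosIn (g : gat) (f : cform) := forall t q, cocc t q (gf g) = true -> cocc t q f = true.
Definition NegIn (g : gat) (f : cform) := forall t q, cocc t q (gf g) = true -> cocc (negb t) q f = true.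
Definition cpol (x : clause) f := (forall g, In g (fst x) -> NegIn g f) /\ (forall g, In g (snd x) -> PosIn g f).
Definition dpol (x : clause) f := (forall g, In g (fst x) -> PosIn g f) /\ (forall g, In g (snd x) -> NegIn g f).

Lemma in_prodm x A B : In x (prodm A B) -> exists a b, In a A /\ In b B /\ x = merge a b.
Proof. unfold prodm; intros H. apply in_flat_map in H as [a [Ha H]]. apply in_map_iff in H as [b [<- Hb]]. eauto. Qed.

Lemma nf_pol f : (forall x, In x (fst (nf f)) -> cpol x f) /\ (forall x, In x (snd (nf f)) -> dpol x f).
Proof.
  induction f; simpl; unfold cpol, dpol, PosIn, NegIn.
  - split; intros x [<-|[]]; simpl; split; intros g Hg; try contradiction; destruct Hg as [<-|[]]; simpl; auto.
  - split; intros x Hx; [destruct Hx as [<-|[]]; simpl; split; intros ? []|contradiction].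
  - destruct IHf1 as [A1 B1], IHf2 as [A2 B2]; unfold cpol, dpol, PosIn, NegIn in *. split; intros x Hx.
    + apply in_app_or in Hx as [Hx|Hx]; [destruct (A1 x Hx) as [H1 H2]|destruct (A2 x Hx) as [H1 H2]];
        split; intros g Hg t q Ho; simpl; first [rewrite (H1 g Hg t q Ho)|rewrite (H2 g Hg t q Ho)]; auto with bool.
    + apply in_prodm in Hx as [a [b [Ha [Hb ->]]]]. destruct (B1 a Ha) as [H1 H2], (B2 b Hb) as [H3 H4].
      unfold merge; simpl; split; intros g Hg t q Ho; simpl; apply in_app_or in Hg as [Hg|Hg];
        first [rewrite (H1 g Hg t q Ho)|rewrite (H2 g Hg t q Ho)|rewrite (H3 g Hg t q Ho)|rewrite (H4 g Hg t q Ho)]; auto with bool.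
  - destruct IHf1 as [A1 B1], IHf2 as [A2 B2]; unfold cpol, dpol, PosIn, NegIn in *. split; intros x Hx.
    + apply in_prodm in Hx as [a [b [Ha [Hb ->]]]]. destruct (A1 a Ha) as [H1 H2], (A2 b Hb) as [H3 H4].
      unfold merge; simpl; split; intros g Hg t q Ho; simpl; apply in_app_or in Hg as [Hg|Hg];
        first [rewrite (H1 g Hg t q Ho)|rewrite (H2 g Hg t q Ho)|rewrite (H3 g Hg t q Ho)|rewrite (H4 g Hg t q Ho)]; auto with bool.
    + apply in_app_or in Hx as [Hx|Hx]; [destruct (B1 x Hx) as [H1 H2]|destruct (B2 x Hx) as [H1 H2]];
        split; intros g Hg t q Ho; simpl; first [rewrite (H1 g Hg t q Ho)|rewrite (H2 g Hg t q Ho)]; auto with bool.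
  - destruct IHf1 as [A1 B1], IHf2 as [A2 B2]; unfold cpol, dpol, PosIn, NegIn in *. split; intros x Hx.
    + apply in_prodm in Hx as [a [b [Ha [Hb ->]]]]. destruct (B1 a Ha) as [H1 H2], (A2 b Hb) as [H3 H4].
      unfold merge; simpl; split; intros g Hg t q Ho; simpl; apply in_app_or in Hg as [Hg|Hg].
      * rewrite negb_involutive, (H1 g Hg t q Ho); auto.
      * rewrite (H3 g Hg t q Ho); auto with bool.
      * rewrite (H2 g Hg t q Ho); auto.
      * rewrite (H4 g Hg t q Ho); auto with bool.
    + apply in_app_or in Hx as [Hx|Hx].
      * destruct (A1 x Hx) as [H1 H2]; split; intros g Hg t q Ho.
        -- simpl; rewrite (H1 g Hg t q Ho); auto.
        -- simpl; rewrite negb_involutive, (H2 g Hg t q Ho); auto.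
      * destruct (B2 x Hx) as [H1 H2]; split; intros g Hg t q Ho; simpl;
          first [rewrite (H1 g Hg t q Ho)|rewrite (H2 g Hg t q Ho)]; auto with bool.
  - split; intros x [<-|[]]; simpl; split; intros g Hg; try contradiction; destruct Hg as [<-|[]]; simpl; auto.
Qed.

Fixpoint cdepth (f : cform) : nat :=
  match f with
  | CAtom _ | CBot => 0
  | CAnd a b | COr a b | CImp a b => max (cdepth a) (cdepth b)
  | CCond a b => S (max (cdepth a) (cdepth b))
  end.

Definition cdep (x : clause) f := forall g, In g (fst x ++ snd x) -> cdepth (gf g) <= cdepth f.

Lemma nf_dep f : (forall x, In x (fst (nf f)) -> cdep x f) /\ (forall x, In x (snd (nf f)) -> cdep x f).
Proof.
  unfold cdep; induction f; simpl.
  - split; intros x [<-|[]] g Hg; simpl in Hg; destruct Hg as [<-|[]]; simpl; auto.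
  - split; intros x Hx; [destruct Hx as [<-|[]]; intros g []|contradiction].
  - destruct IHf1 as [A1 B1], IHf2 as [A2 B2]. split; intros x Hx g Hg.
    + apply in_app_or in Hx as [Hx|Hx]; [specialize (A1 x Hx g Hg)|specialize (A2 x Hx g Hg)]; lia.
    + apply in_prodm in Hx as [a [b [Ha [Hb ->]]]]. unfold merge in Hg; simpl in Hg.
      rewrite !in_app_iff in Hg. destruct Hg as [[Hg|Hg]|[Hg|Hg]];
      first [specialize (B1 a Ha g (in_or_app _ _ _ (or_introl Hg)))
            |specialize (B2 b Hb g (in_or_app _ _ _ (or_introl Hg)))
            |specialize (B1 a Ha g (in_or_app _ _ _ (or_intror Hg)))
            |specialize (B2 b Hb g (in_or_app _ _ _ (or_intror Hg)))]; lia.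
  - destruct IHf1 as [A1 B1], IHf2 as [A2 B2]. split; intros x Hx g Hg.
    + apply in_prodm in Hx as [a [b [Ha [Hb ->]]]]. unfold merge in Hg; simpl in Hg.
      rewrite !in_app_iff in Hg. destruct Hg as [[Hg|Hg]|[Hg|Hg]];
      first [specialize (A1 a Ha g (in_or_app _ _ _ (or_introl Hg)))
            |specialize (A2 b Hb g (in_or_app _ _ _ (or_introl Hg)))
            |specialize (A1 a Ha g (in_or_app _ _ _ (or_intror Hg)))
            |specialize (A2 b Hb g (in_or_app _ _ _ (or_intror Hg)))]; lia.
    + apply in_app_or in Hx as [Hx|Hx]; [specialize (B1 x Hx g Hg)|specialize (B2 x Hx g Hg)]; lia.
  - destruct IHf1 as [A1 B1], IHf2 as [A2 B2]. split; intros x Hx g Hg.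
    + apply in_prodm in Hx as [a [b [Ha [Hb ->]]]]. unfold merge in Hg; simpl in Hg.
      rewrite !in_app_iff in Hg. destruct Hg as [[Hg|Hg]|[Hg|Hg]];
      first [specialize (B1 a Ha g (in_or_app _ _ _ (or_introl Hg)))
            |specialize (A2 b Hb g (in_or_app _ _ _ (or_introl Hg)))
            |specialize (B1 a Ha g (in_or_app _ _ _ (or_intror Hg)))
            |specialize (A2 b Hb g (in_or_app _ _ _ (or_intror Hg)))]; lia.
    + apply in_app_or in Hx as [Hx|Hx]; [specialize (A1 x Hx g Hg)|specialize (B2 x Hx g Hg)]; lia.
  - split; intros x [<-|[]] g Hg; simpl in Hg; destruct Hg as [<-|[]]; simpl; auto.
Qed.


Definition pair_eq_dec : forall x y : cform * cform, {x = y} + {x <> y}.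
Proof. decide equality; apply cform_eq_dec. Defined.

Definition latoms (l : list gat) : list nat :=
  flat_map (fun g => match g with GV n => [n] | _ => [] end) l.
Definition lconds (l : list gat) : list (cform * cform) :=
  flat_map (fun g => match g with GC a b => [(a, b)] | _ => [] end) l.

Lemma latoms_In n l : In n (latoms l) <-> In (GV n) l.
Proof.
  unfold latoms; rewrite in_flat_map; split.
  - intros [g [Hg Hn]]; destruct g; simpl in Hn; [destruct Hn as [<-|[]]; auto|contradiction].
  - intros H; exists (GV n); simpl; auto.
Qed.
Lemma lconds_In y l : In y (lconds l) <-> In (GC (fst y) (snd y)) l.
Proof.
  unfold lconds; rewrite in_flat_map; split.
  - intros [g [Hg Hn]]; destruct g; simpl in Hn; [contradiction|destruct Hn as [<-|[]]; auto].
  - intros H; exists (GC (fst y) (snd y)); simpl; destruct y; auto.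
Qed.

Definition clf (x : clause) : cform := CImp (bigand (map gf (fst x))) (bigor (map gf (snd x))).

Lemma clf_eval va vc x : ceval va vc (clf x) = ce va vc x.
Proof.
  unfold clf, ce. simpl. rewrite bigand_eval, bigor_eval.
  assert (E1 : forall l, forallb (ceval va vc) (map gf l) = forallb (fun g => ceval va vc (gf g)) l).
  { induction l; simpl; auto. rewrite IHl; auto. }
  assert (E2 : forall l, existsb (ceval va vc) (map gf l) = existsb (fun g => ceval va vc (gf g)) l).
  { induction l; simpl; auto. rewrite IHl; auto. }
  rewrite E1, E2. destruct (forallb _ _), (existsb _ _); auto.
Qed.

Lemma forallb_gat va vc l :
  forallb (fun g => ceval va vc (gf g)) l = true <->
  (forall n, In n (latoms l) -> va n = true) /\ (forall y, In y (lconds l) -> vc (fst y) (snd y) = true).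
Proof.
  rewrite forallb_forall. split.
  - intros H; split; [intros n Hn; apply latoms_In in Hn|intros y Hy; apply lconds_In in Hy];
      apply H in Hn || apply H in Hy; auto.
  - intros [H1 H2] g Hg. destruct g; simpl.
    + apply H1, latoms_In; auto.
    + apply (H2 (a, b)), lconds_In; auto.
Qed.

Lemma existsb_gat va vc l :
  existsb (fun g => ceval va vc (gf g)) l = true <->
  (exists n, In n (latoms l) /\ va n = true) \/ (exists y, In y (lconds l) /\ vc (fst y) (snd y) = true).
Proof.
  rewrite existsb_exists. split.
  - intros [g [Hg H]]; destruct g; simpl in H.
    + left; exists n; rewrite latoms_In; auto.
    + right; exists (a, b); rewrite lconds_In; auto.
  - intros [[n [Hn H]]|[y [Hy H]]].
    + exists (GV n); rewrite <- latoms_In; auto.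
    + exists (GC (fst y) (snd y)); rewrite <- lconds_In; auto.
Qed.

Lemma cocc_bigand t q l : cocc t q (bigand l) = existsb (cocc t q) l.
Proof. induction l; simpl; auto. rewrite IHl; auto. Qed.
Lemma cocc_bigor t q l : cocc t q (bigor l) = existsb (cocc t q) l.
Proof. induction l; simpl; auto. rewrite IHl; auto. Qed.

Section Qdef.
Variable Ax : cform -> Prop.
Variable P : params.
Variable p : nat.
Notation prov := (cprov Ax).

Definition GoodA (s : bool) (f A : cform) : Prop :=
  cocc s p A = false /\ (forall t q, cocc t q A = true -> cocc t q f = true) /\
  prov (CImp A f) /\ (forall psi, cocc s p psi = false -> prov (CImp psi f) -> prov (CImp psi A)).
Definition GoodE (s : bool) (f E : cform) : Prop :=
  cocc s p E = false /\ (forall t q, cocc t q E = true -> cocc t q f = true) /\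
  prov (CImp f E) /\ (forall psi, cocc s p psi = false -> prov (CImp f psi) -> prov (CImp E psi)).

Definition idimp (c X : cform) : cform := if idf P then CImp c X else X.
Definition Bl (l : list gat) := nodup pair_eq_dec (lconds l).

Section Fun.
Variable fa fe : bool -> cform -> cform.

Definition lits (s : bool) (l r : list gat) : list cform :=
  map CAtom (filter (fun q => negb (Nat.eqb q p && s)) (latoms r)) ++
  map (fun q => cneg (CAtom q)) (filter (fun q => negb (Nat.eqb q p && negb s)) (latoms l)).

Definition upc (s : bool) (x : cform * cform) := fa (negb s) (fst x).
Definition upw (s : bool) (SG : list (cform * cform)) (x : cform * cform) :=
  fa s (idimp (fst x) (CImp (bigand (map snd SG)) (snd x))).
Definition upd s SG x : list cform :=
  if xm (Cond Ax P ((upc s x, upw s SG x) :: SG) (fst x) (snd x)) then [CCond (upc s x) (upw s SG x)] else [].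
Definition ups (s : bool) (l r : list gat) : list cform :=
  flat_map (fun SG => flat_map (upd s SG) (lconds r)) (sublists (Bl l)).

Definition dnc (s : bool) (SG : list (cform * cform)) :=
  match SG with [] => CTop | g :: _ => fa s (fst g) end.
Definition dne (s : bool) (SG : list (cform * cform)) := fe (negb s) (bigand (map snd SG)).
Definition dnd s SG : list cform :=
  match SG with
  | [] => []
  | _ => if xm (Cond Ax P SG (dnc s SG) (dne s SG)) then [cneg (CCond (dnc s SG) (dne s SG))] else []
  end.
Definition downs (s : bool) (l : list gat) : list cform := flat_map (dnd s) (sublists (Bl l)).

Definition Q (s : bool) (x : clause) : cform :=
  if xm (prov (clf x)) then CTop
  else bigor (lits s (fst x) (snd x) ++ ups s (fst x) (snd x) ++ downs s (fst x)).

Lemma in_lits s l r z : In z (lits s l r) <->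
  (exists q, z = CAtom q /\ In q (latoms r) /\ negb (Nat.eqb q p && s) = true) \/
  (exists q, z = cneg (CAtom q) /\ In q (latoms l) /\ negb (Nat.eqb q p && negb s) = true).
Proof.
  unfold lits. rewrite in_app_iff, !in_map_iff. split.
  - intros [[q [<- Hq]]|[q [<- Hq]]]; apply filter_In in Hq as [H1 H2]; [left|right]; eauto.
  - intros [[q [-> [H1 H2]]]|[q [-> [H1 H2]]]]; [left|right]; exists q; rewrite filter_In; auto.
Qed.

Lemma in_ups s l r z : In z (ups s l r) <->
  exists SG x, In SG (sublists (Bl l)) /\ In x (lconds r) /\
    Cond Ax P ((upc s x, upw s SG x) :: SG) (fst x) (snd x) /\ z = CCond (upc s x) (upw s SG x).
Proof.
  unfold ups. rewrite in_flat_map. split.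
  - intros [SG [HSG Hz]]. apply in_flat_map in Hz as [x [Hx Hz]]. unfold upd in Hz.
    destruct (xm _) as [HC|]; [|contradiction]. destruct Hz as [<-|[]]. exists SG, x; auto.
  - intros [SG [x [HSG [Hx [HC ->]]]]]. exists SG; split; auto. apply in_flat_map. exists x; split; auto.
    unfold upd. destruct (xm _); [left; auto|contradiction].
Qed.

Lemma in_downs s l z : In z (downs s l) <->
  exists SG, In SG (sublists (Bl l)) /\ SG <> [] /\
    Cond Ax P SG (dnc s SG) (dne s SG) /\ z = cneg (CCond (dnc s SG) (dne s SG)).
Proof.
  unfold downs. rewrite in_flat_map. split.
  - intros [SG [HSG Hz]]. unfold dnd in Hz. destruct SG as [|g SG']; [contradiction|].
    destruct (xm _) as [HC|]; [|contradiction]. destruct Hz as [<-|[]].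
    exists (g :: SG'); split; [auto|split; [discriminate|split; auto]].
  - intros [SG [HSG [Hne [HC ->]]]]. exists SG; split; auto. unfold dnd.
    destruct SG; [congruence|]. destruct (xm _); [left; auto|contradiction].
Qed.

End Fun.

Fixpoint ua (n : nat) (s : bool) (f : cform) : cform :=
  match n with
  | 0 => CTop
  | S m => bigand (map (Q (ua m) (fun t x => cneg (ua m (negb t) (cneg x))) s) (fst (nf f)))
  end.

Definition Sim (s : bool) va vc va' vc' : Prop :=
  (forall q, q <> p -> va' q = va q) /\
  (s = true -> va' p = true -> va p = true) /\
  (s = false -> va p = true -> va' p = true) /\
  (forall a b, cocc s p (CCond a b) = false -> vc a b = true -> vc' a b = true) /\
  (forall a b, cocc (negb s) p (CCond a b) = false -> vc' a b = true -> vc a b = true).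

Lemma SimEval s va vc va' vc' : Sim s va vc va' vc' -> forall chi,
  (cocc s p chi = false -> ceval va vc chi = true -> ceval va' vc' chi = true) /\
  (cocc (negb s) p chi = false -> ceval va' vc' chi = true -> ceval va vc chi = true).
Proof.
  intros [S1 [S2 [S3 [S4 S5]]]]. induction chi; simpl.
  - destruct (Nat.eq_dec n p) as [->|Hne].
    + rewrite Nat.eqb_refl. destruct s; simpl; split; intros H1 H2; try discriminate; auto.
    + rewrite (S1 n Hne); auto.
  - split; intros; discriminate.
  - destruct IHchi1 as [A1 B1], IHchi2 as [A2 B2]. split; intros Ho He;
      apply orb_false_iff in Ho as [Ho1 Ho2]; apply andb_true_iff in He as [He1 He2];
      apply andb_true_iff; auto.
  - destruct IHchi1 as [A1 B1], IHchi2 as [A2 B2]. split; intros Ho He;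
      apply orb_false_iff in Ho as [Ho1 Ho2]; apply orb_true_iff in He as [He|He];
      apply orb_true_iff; auto.
  - destruct IHchi1 as [A1 B1], IHchi2 as [A2 B2]. split; intros Ho He;
      apply orb_false_iff in Ho as [Ho1 Ho2].
    + destruct (ceval va' vc' chi1) eqn:E; simpl; auto.
      rewrite (B1 Ho1 eq_refl) in He; simpl in He; auto.
    + rewrite negb_involutive in Ho1.
      destruct (ceval va vc chi1) eqn:E; simpl; auto.
      rewrite (A1 Ho1 eq_refl) in He; simpl in He; auto.
  - split; intros Ho He; auto.
Qed.

End Qdef.


Lemma Bl_In y l : In y (Bl l) <-> In y (lconds l).
Proof. unfold Bl; apply nodup_In. Qed.

Lemma dep_bigand m l : 0 < m -> (forall z, In z l -> cdepth z < m) -> cdepth (bigand l) < m.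
Proof. intros H0; induction l; simpl; intros H; auto.
  assert (cdepth (bigand l) < m) by (apply IHl; intros z Hz; apply H; right; auto).
  specialize (H a (or_introl eq_refl)). lia. Qed.

Lemma cocc_cneg t q a : cocc t q (cneg a) = cocc (negb t) q a.
Proof. simpl. destruct (cocc (negb t) q a); auto. Qed.

Section Step.
Variable Ax : cform -> Prop.
Variable P : params.
Variable p : nat.
Notation prov := (cprov Ax).
Hypothesis HP1 : lok P 1 = true.
Hypothesis HPsum : forall lens, lok P (length lens) = true ->
  Forall (fun k => lok P k = true) lens -> lok P (list_sum lens) = true.
Hypothesis HPdown : forall n k, lok P n = true -> 1 <= k -> k <= n -> lok P k = true.
Hypothesis HPnm : mono P = false -> forall n, lok P n = true -> n <= 1.
Hypothesis HPnmid : mono P = false -> idf P = false.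
Hypothesis HAx : forall f, Ax f -> forall va vc, resp Ax P vc -> ceval va vc f = true.
Hypothesis HC : forall S c d, Cond Ax P S c d -> prov (CImp (bigand (map condf S)) (CCond c d)).

Variable fa fe : bool -> cform -> cform.
Variable m : nat.
Hypothesis DA : forall s y, cdepth y < m -> GoodA Ax p s y (fa s y).
Hypothesis DE : forall s y, cdepth y < m -> GoodE Ax p s y (fe s y).
Variable f : cform.
Variable x : clause.
Hypothesis Hpol : cpol x f.
Hypothesis Hdep : cdep x f.
Hypothesis Hfm : cdepth f <= m.

Lemma dep_l y : In y (lconds (fst x)) -> cdepth (fst y) < m /\ cdepth (snd y) < m.
Proof. intros H. apply lconds_In in H. specialize (Hdep _ (in_or_app _ _ _ (or_introl H))).
  simpl in Hdep. lia. Qed.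
Lemma dep_r y : In y (lconds (snd x)) -> cdepth (fst y) < m /\ cdepth (snd y) < m.
Proof. intros H. apply lconds_In in H. specialize (Hdep _ (in_or_app _ _ _ (or_intror H))).
  simpl in Hdep. lia. Qed.

Lemma SG_l SG : In SG (sublists (Bl (fst x))) -> forall y, In y SG -> In y (lconds (fst x)).
Proof. intros H y Hy. apply Bl_In. apply (sublists_incl _ _ H); auto. Qed.

Lemma dep_up SG y : In SG (sublists (Bl (fst x))) -> In y (lconds (snd x)) ->
  cdepth (idimp P (fst y) (CImp (bigand (map snd SG)) (snd y))) < m.
Proof.
  intros H1 H2. destruct (dep_r y H2) as [D1 D2].
  assert (D3 : cdepth (bigand (map snd SG)) < m).
  { apply dep_bigand; [lia|]. intros z Hz. apply in_map_iff in Hz as [w [<- Hw]].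
    apply (dep_l w (SG_l SG H1 w Hw)). }
  unfold idimp; destruct (idf P); simpl; lia.
Qed.

Lemma dep_dn SG : In SG (sublists (Bl (fst x))) -> SG <> [] ->
  cdepth (bigand (map snd SG)) < m /\ (forall g, In g SG -> cdepth (fst g) < m).
Proof.
  intros H1 H2. destruct SG as [|g0 SG']; [congruence|].
  destruct (dep_l g0 (SG_l _ H1 g0 (or_introl eq_refl))) as [D0 _].
  split.
  - apply dep_bigand; [lia|]. intros z Hz. apply in_map_iff in Hz as [w [<- Hw]].
    apply (dep_l w (SG_l _ H1 w Hw)).
  - intros g Hg; apply (dep_l g (SG_l _ H1 g Hg)).
Qed.

Lemma Q_free s : cocc s p (Q Ax P p fa fe s x) = false.
Proof.
  unfold Q. destruct (xm _); [reflexivity|]. rewrite cocc_bigor.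
  destruct (existsb _ _) eqn:E; auto. apply existsb_exists in E as [z [Hz Ho]].
  rewrite !in_app_iff in Hz. destruct Hz as [Hz|[Hz|Hz]].
  - apply in_lits in Hz as [[q [-> [_ Hq]]]|[q [-> [_ Hq]]]]; simpl in Ho.
    + rewrite Nat.eqb_sym in Ho. destruct s, (Nat.eqb q p); simpl in *; congruence.
    + rewrite Nat.eqb_sym in Ho. destruct s, (Nat.eqb q p); simpl in *; congruence.
  - apply in_ups in Hz as [SG [y [HSG [Hy [_ ->]]]]]. simpl in Ho.
    unfold upc, upw in Ho.
    destruct (DA (negb s) (fst y) (proj1 (dep_r y Hy))) as [F1 _].
    destruct (DA s _ (dep_up SG y HSG Hy)) as [F2 _].
    rewrite F1, F2 in Ho; discriminate.
  - apply in_downs in Hz as [SG [HSG [Hne [_ ->]]]]. rewrite cocc_cneg in Ho. simpl in Ho.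
    destruct (dep_dn SG HSG Hne) as [D1 D2].
    destruct SG as [|g SG']; [congruence|]. unfold dnc, dne in Ho. rewrite negb_involutive in Ho.
    destruct (DA s (fst g) (D2 g (or_introl eq_refl))) as [F1 _].
    destruct (DE (negb s) _ D1) as [F2 _].
    rewrite F1, F2 in Ho; discriminate.
Qed.

Lemma Q_vars s t q : cocc t q (Q Ax P p fa fe s x) = true -> cocc t q f = true.
Proof.
  destruct Hpol as [HL HR].
  unfold Q. destruct (xm _); [discriminate|]. rewrite cocc_bigor.
  intros E. apply existsb_exists in E as [z [Hz Ho]].
  rewrite !in_app_iff in Hz. destruct Hz as [Hz|[Hz|Hz]].
  - apply in_lits in Hz as [[q' [-> [Hq _]]]|[q' [-> [Hq _]]]].
    + apply latoms_In in Hq. apply (HR _ Hq); auto.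
    + apply latoms_In in Hq. rewrite cocc_cneg in Ho. rewrite <- (negb_involutive t).
      apply (HL _ Hq); auto.
  - apply in_ups in Hz as [SG [y [HSG [Hy [_ ->]]]]]. simpl in Ho. unfold upc, upw in Ho.
    pose proof (lconds_In y (snd x)) as Hy'. apply Hy' in Hy as Hy2.
    apply orb_true_iff in Ho as [Ho|Ho].
    + destruct (DA (negb s) (fst y) (proj1 (dep_r y Hy))) as [_ [V _]].
      apply (HR _ Hy2). simpl. rewrite (V _ _ Ho); auto.
    + destruct (DA s _ (dep_up SG y HSG Hy)) as [_ [V _]]. apply V in Ho.
      unfold idimp in Ho.
      assert (Ho2 : cocc (negb t) q (fst y) = true \/ cocc (negb t) q (bigand (map snd SG)) = true \/
                    cocc t q (snd y) = true).
      { destruct (idf P); simpl in Ho; repeat rewrite orb_true_iff in Ho; tauto. }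
      clear Ho; destruct Ho2 as [Ho|[Ho|Ho]].
      * apply (HR _ Hy2). simpl. rewrite Ho; auto.
      * rewrite cocc_bigand in Ho. apply existsb_exists in Ho as [w [Hw Ho]].
        apply in_map_iff in Hw as [g [<- Hg]].
        pose proof (SG_l SG HSG g Hg) as Hg2. apply lconds_In in Hg2.
        rewrite <- (negb_involutive t). apply (HL _ Hg2). simpl. rewrite Ho; auto with bool.
      * apply (HR _ Hy2). simpl. rewrite Ho; auto with bool.
  - apply in_downs in Hz as [SG [HSG [Hne [_ ->]]]]. rewrite cocc_cneg in Ho. simpl in Ho.
    destruct (dep_dn SG HSG Hne) as [D1 D2].
    destruct SG as [|g SG']; [congruence|]. unfold dnc, dne in Ho. rewrite negb_involutive in Ho.
    apply orb_true_iff in Ho as [Ho|Ho].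
    + destruct (DA s (fst g) (D2 g (or_introl eq_refl))) as [_ [V _]]. apply V in Ho.
      pose proof (SG_l _ HSG g (or_introl eq_refl)) as Hg2. apply lconds_In in Hg2.
      rewrite <- (negb_involutive t). apply (HL _ Hg2). simpl. rewrite negb_involutive, Ho; auto.
    + destruct (DE (negb s) _ D1) as [_ [V _]]. apply V in Ho.
      rewrite cocc_bigand in Ho. apply existsb_exists in Ho as [w [Hw Ho]].
      apply in_map_iff in Hw as [g' [<- Hg]].
      pose proof (SG_l _ HSG g' Hg) as Hg2. apply lconds_In in Hg2.
      rewrite <- (negb_involutive t). apply (HL _ Hg2). simpl. rewrite Ho; auto with bool.
Qed.

Lemma Q_sound s va vc : resp Ax P vc -> ceval va vc (Q Ax P p fa fe s x) = true -> ce va vc x = true.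
Proof.
  intros Hr. unfold Q. destruct (xm _) as [Hp|Hnp].
  - intros _. rewrite <- clf_eval. apply (soundness Ax P HP1 HAx _ Hp); auto.
  - rewrite bigor_eval. intros E. apply existsb_exists in E as [z [Hz Ho]].
    unfold ce. destruct (forallb _ (fst x)) eqn:EL; simpl; auto.
    apply forallb_gat in EL as [EL1 EL2].
    rewrite !in_app_iff in Hz. destruct Hz as [Hz|[Hz|Hz]].
    + apply in_lits in Hz as [[q [-> [Hq _]]]|[q [-> [Hq _]]]]; simpl in Ho.
      * apply existsb_gat. left; eauto.
      * rewrite (EL1 q Hq) in Ho; discriminate.
    + apply in_ups in Hz as [SG [y [HSG [Hy [HCd ->]]]]]. simpl in Ho.
      apply existsb_gat. right. exists y; split; auto.
      apply (Hr _ _ _ HCd). intros w [<-|Hw]; simpl; auto.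
      apply EL2. apply (SG_l SG HSG w Hw).
    + apply in_downs in Hz as [SG [HSG [Hne [HCd ->]]]]. simpl in Ho.
      rewrite (Hr _ _ _ HCd) in Ho; [discriminate|].
      intros w Hw. apply EL2. apply (SG_l SG HSG w Hw).
Qed.

Lemma fa_map (g : cform -> bool) (S : list (cform * cform)) :
  forallb g (map snd S) = true <-> forall z, In z S -> g (snd z) = true.
Proof.
  rewrite forallb_forall. split.
  - intros H z Hz; apply H, in_map; auto.
  - intros H w Hw; apply in_map_iff in Hw as [z [<- Hz]]; auto.
Qed.

Lemma set_fa (S A B : list (cform * cform)) :
  (forall z, In z S <-> In z A \/ In z B) ->
  forall g, forallb g (map snd S) = forallb g (map snd A) && forallb g (map snd B).
Proof.
  intros H g. apply eq_iff_eq_true. rewrite andb_true_iff, !fa_map. split.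
  - intros H1; split; intros z Hz; apply H1, H; auto.
  - intros [H1 H2] z Hz; apply H in Hz as [Hz|Hz]; auto.
Qed.

Lemma existsb_eqb_In q L : existsb (Nat.eqb q) L = true <-> In q L.
Proof.
  rewrite existsb_exists. split.
  - intros [n [Hn E]]; apply Nat.eqb_eq in E; subst; auto.
  - intros H; exists q; split; auto; apply Nat.eqb_refl.
Qed.

Lemma iff_trans a b c : prov (CIff a b) -> prov (CIff b c) -> prov (CIff a c).
Proof. intros H1 H2; apply (prov_sem2 _ _ _ _ H1 H2); crush. Qed.

Section Cex.
Variable s : bool.
Variable va : nat -> bool.
Variable vc : cform -> cform -> bool.
Hypothesis Hr : resp Ax P vc.
Hypothesis Hnp : ~ prov (clf x).
Hypothesis Hdis : forall z, In z (lits p s (fst x) (snd x) ++ ups Ax P fa s (fst x) (snd x) ++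
                                 downs Ax P fa fe s (fst x)) -> ceval va vc z = false.

Definition isT (y : cform * cform) : Prop :=
  vc (fst y) (snd y) = true /\ cocc s p (CCond (fst y) (snd y)) = false.

Definition PrT (z : cform * cform) : Prop := isT z \/ In z (lconds (fst x)).

Lemma splitS S : (forall z, In z S -> PrT z) ->
  exists ST SGL, (forall z, In z ST -> isT z) /\ (forall z, In z SGL -> In z (lconds (fst x))) /\
    length ST + length SGL = length S /\ (forall z, In z S <-> In z ST \/ In z SGL).
Proof.
  induction S as [|y S IH]; intros H.
  - exists [], []; simpl; repeat split; auto; try tauto.
  - destruct IH as [ST [SGL [H1 [H2 [H3 H4]]]]]. { intros; apply H; right; auto. }
    destruct (classic (isT y)) as [Hy|Hy].
    + exists (y :: ST), SGL; simpl; split; [|split; [|split]]; auto; try lia.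
      * intros z [<-|Hz]; auto.
      * intros z; split; [intros [<-|Hz]; auto; apply H4 in Hz; tauto|].
        intros [[<-|Hz]|Hz]; auto; right; apply H4; auto.
    + exists ST, (y :: SGL); simpl; split; [|split; [|split]]; auto; try lia.
      * intros z [<-|Hz]; auto. destruct (H y (or_introl eq_refl)); tauto.
      * intros z; split; [intros [<-|Hz]; auto; apply H4 in Hz; tauto|].
        intros [Hz|[<-|Hz]]; auto; right; apply H4; auto.
Qed.

Lemma mkSG SGL : (forall z, In z SGL -> In z (lconds (fst x))) ->
  exists SG, In SG (sublists (Bl (fst x))) /\ (forall y, In y SG <-> In y SGL) /\ length SG <= length SGL.
Proof.
  intros H. exists (filter (fun y => if in_dec pair_eq_dec y SGL then true else false) (Bl (fst x))).
  split; [apply filter_sublists|]. split.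
  - intros y; rewrite filter_In. split.
    + intros [_ E]; destruct (in_dec _ _ _); auto; discriminate.
    + intros Hy; split; [apply Bl_In; auto|]. destruct (in_dec _ _ _); auto.
  - apply NoDup_incl_length.
    + apply NoDup_filter, NoDup_nodup.
    + intros y Hy; apply filter_In in Hy as [_ E]; destruct (in_dec _ _ _); auto; discriminate.
Qed.

Lemma isT_free z : isT z -> cocc (negb s) p (fst z) = false /\ cocc s p (snd z) = false.
Proof. intros [_ H]; simpl in H; apply orb_false_iff in H; auto. Qed.

Lemma free_ST ST : (forall z, In z ST -> isT z) -> cocc s p (bigand (map snd ST)) = false.
Proof.
  intros H. rewrite cocc_bigand. destruct (existsb _ _) eqn:E; auto.
  apply existsb_exists in E as [w [Hw E]]. apply in_map_iff in Hw as [z [<- Hz]].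
  rewrite (proj2 (isT_free z (H z Hz))) in E; discriminate.
Qed.

Lemma R2b y S : In y (lconds (snd x)) -> (forall z, In z S -> PrT z) -> Cond Ax P S (fst y) (snd y) -> False.
Proof.
  intros Hy HS HCd. destruct (splitS S HS) as [ST [SGL [HT [HG [Hlen Hset]]]]].
  pose proof HCd as [Hlok [Hfirst [Hguard Hmono]]].
  destruct ST as [|t0 ST'].
  - apply Hnp. apply (completeness Ax P HP1 HPsum HC). intros va0 vc0 Hr0. rewrite clf_eval.
    unfold ce. destruct (forallb _ (fst x)) eqn:EL; simpl; auto.
    apply forallb_gat in EL as [_ EL2]. apply existsb_gat. right. exists y. split; auto.
    apply (Hr0 S _ _ HCd). intros z Hz. apply EL2. apply Hset in Hz as [[]|Hz]; auto.
  - destruct (mkSG SGL HG) as [SG [HSGin [HSGset HSGlen]]].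
    destruct y as [c d]. simpl in *.
    assert (Ht0 : In t0 S) by (apply Hset; left; left; auto).
    destruct (isT_free t0 (HT t0 (or_introl eq_refl))) as [F1 F2].
    pose proof (Hfirst t0 Ht0) as Hi0.
    destruct (dep_r (c, d) Hy) as [Dc Dd]; simpl in Dc, Dd.
    destruct (DA (negb s) c Dc) as [_ [_ [Ic' Uc']]].
    assert (H0c' : prov (CImp (fst t0) (fa (negb s) c))).
    { apply Uc'; auto. apply (prov_sem1 _ _ _ Hi0); crush. }
    assert (Hc'c : prov (CIff (fa (negb s) c) c)).
    { apply (prov_sem3 _ _ _ _ _ Ic' Hi0 H0c'); crush. }
    set (c' := fa (negb s) c) in *.
    set (X := idimp P c (CImp (bigand (map snd SG)) d)).
    pose proof (set_fa S (t0 :: ST') SGL Hset) as E1.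
    assert (E2 : forall g, forallb g (map snd SGL) = forallb g (map snd SG) && forallb g (map snd (@nil (cform * cform)))).
    { apply set_fa. intros z; rewrite HSGset; simpl; tauto. }
    assert (HX : prov (CImp (bigand (map snd (t0 :: ST'))) X)).
    { apply (prov_sem1 _ _ _ Hguard). intros va0 vc0. pose proof (E1 (ceval va0 vc0)).
      pose proof (E2 (ceval va0 vc0)). unfold X, idimp. revert va0 vc0 H H0. crush. }
    destruct (DA s X (dep_up SG (c, d) HSGin Hy)) as [_ [_ [Iw Uw]]].
    assert (Hw : prov (CImp (bigand (map snd (t0 :: ST'))) (fa s X))).
    { apply Uw; auto. apply free_ST; auto. }
    set (w := fa s X) in *.
    assert (HC1 : Cond Ax P ((c', w) :: SG) c d).
    { split; [|split; [|split]].
      - apply (HPdown (length S)); auto; simpl in *; lia.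
      - intros z [<-|Hz]; simpl; auto. apply Hfirst, Hset; right; apply HSGset; auto.
      - apply (prov_sem1 _ _ _ Iw). unfold X, idimp. crush.
      - case_eq (mono P); intros Em; [left; auto|right].
        destruct Hmono as [Hm|Hm]; [congruence|].
        pose proof (HPnm Em _ Hlok) as Hle.
        destruct ST'; [|simpl in *; lia]. destruct SGL; [|simpl in *; lia].
        destruct SG; [|simpl in *; lia].
        apply (prov_sem2 _ _ _ _ Hm Hw). intros va0 vc0. pose proof (E1 (ceval va0 vc0)).
        revert va0 vc0 H. crush. }
    assert (Hdz : ceval va vc (CCond c' w) = false).
    { apply Hdis. rewrite !in_app_iff; right; left. apply in_ups. exists SG, (c, d); auto. }
    simpl in Hdz.
    assert (HC2 : Cond Ax P (t0 :: ST') c' w).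
    { split; [|split; [|split]].
      - apply (HPdown (length S)); auto; simpl in *; lia.
      - intros z Hz. apply (iff_trans _ c); [apply Hfirst, Hset; left; auto|].
        apply (prov_sem1 _ _ _ Hc'c); crush.
      - apply (prov_sem1 _ _ _ Hw). crush.
      - case_eq (mono P); intros Em; [left; auto|right].
        destruct Hmono as [Hm|Hm]; [congruence|].
        pose proof (HPnm Em _ Hlok) as Hle.
        destruct ST'; [|simpl in *; lia]. destruct SGL; [|simpl in *; lia].
        destruct SG; [|simpl in *; lia].
        apply (prov_sem2 _ _ _ _ Hm Iw). intros va0 vc0. pose proof (E1 (ceval va0 vc0)).
        unfold X, idimp. rewrite (HPnmid Em). revert va0 vc0 H. crush. }
    rewrite (Hr _ _ _ HC2) in Hdz; [discriminate|].
    intros z Hz. apply (HT z Hz).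
Qed.

Lemma B2 a b S : cocc (negb s) p (CCond a b) = false -> (forall z, In z S -> PrT z) ->
  Cond Ax P S a b -> vc a b = true.
Proof.
  intros Hab HS HCd. simpl in Hab. rewrite negb_involutive in Hab.
  apply orb_false_iff in Hab as [Fa Fb].
  destruct (splitS S HS) as [ST [SGL [HT [HG [Hlen Hset]]]]].
  pose proof HCd as [Hlok [Hfirst [Hguard Hmono]]].
  destruct SGL as [|g0 SGL'].
  - apply (Hr _ _ _ HCd). intros z Hz. apply Hset in Hz as [Hz|[]]. apply (HT z Hz).
  - destruct (mkSG (g0 :: SGL') HG) as [SG [HSGin [HSGset HSGlen]]].
    destruct SG as [|g SGr]; [exfalso; apply (proj2 (HSGset g0)); left; auto|].
    assert (Hg : In g S) by (apply Hset; right; apply HSGset; left; auto).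
    pose proof (Hfirst g Hg) as Hga.
    assert (Hne : g :: SGr <> []) by discriminate.
    destruct (dep_dn (g :: SGr) HSGin Hne) as [D1 D2].
    destruct (DA s (fst g) (D2 g (or_introl eq_refl))) as [_ [_ [Ic Uc]]].
    assert (Hac : prov (CImp a (fa s (fst g)))).
    { apply Uc; auto. apply (prov_sem1 _ _ _ Hga); crush. }
    assert (Hca : prov (CIff (fa s (fst g)) a)).
    { apply (prov_sem3 _ _ _ _ _ Ic Hga Hac); crush. }
    set (c'' := fa s (fst g)) in *.
    set (Y := CImp (guard P a (bigand (map snd ST))) b).
    assert (FY : cocc (negb s) p Y = false).
    { unfold Y, guard. simpl. rewrite negb_involutive. apply orb_false_iff; split; auto.
      destruct (idf P); simpl; [rewrite Fa; simpl|]; apply free_ST; auto. }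
    pose proof (set_fa S ST (g :: SGr) (fun z => ltac:(rewrite Hset, HSGset; tauto))) as E1.
    assert (HY : prov (CImp (bigand (map snd (g :: SGr))) Y)).
    { apply (prov_sem1 _ _ _ Hguard). intros va0 vc0. pose proof (E1 (ceval va0 vc0)).
      unfold Y. revert va0 vc0 H. crush. }
    destruct (DE (negb s) _ D1) as [_ [_ [Ie Ue]]].
    pose proof (Ue Y FY HY) as HeY.
    set (e := fe (negb s) (bigand (map snd (g :: SGr)))) in *.
    assert (HC1 : Cond Ax P (g :: SGr) c'' e).
    { split; [|split; [|split]].
      - apply (HPdown (length S)); auto; simpl in *; lia.
      - intros z Hz. apply (iff_trans _ a); [apply Hfirst, Hset; right; apply HSGset; auto|].
        apply (prov_sem1 _ _ _ Hca); crush.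
      - apply (prov_sem1 _ _ _ Ie). crush.
      - case_eq (mono P); intros Em; [left; auto|right].
        destruct Hmono as [Hm|Hm]; [congruence|].
        pose proof (HPnm Em _ Hlok) as Hle.
        destruct ST; [|simpl in *; lia].
        apply (prov_sem2 _ _ _ _ HeY Hm). intros va0 vc0. pose proof (E1 (ceval va0 vc0)).
        unfold Y, guard. rewrite (HPnmid Em). revert va0 vc0 H. crush. }
    assert (Hdz : ceval va vc (cneg (CCond c'' e)) = false).
    { apply Hdis. rewrite !in_app_iff; right; right. apply in_downs.
      exists (g :: SGr); auto. }
    simpl in Hdz. destruct (vc c'' e) eqn:Ev; [|discriminate].
    assert (HC2 : Cond Ax P ((c'', e) :: ST) a b).
    { split; [|split; [|split]].
      - apply (HPdown (length S)); auto; simpl in *; lia.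
      - intros z [<-|Hz]; simpl; auto. apply Hfirst, Hset; left; auto.
      - apply (prov_sem1 _ _ _ HeY). unfold Y. crush.
      - case_eq (mono P); intros Em; [left; auto|right].
        destruct Hmono as [Hm|Hm]; [congruence|].
        pose proof (HPnm Em _ Hlok) as Hle.
        destruct ST; [|simpl in *; lia].
        apply (prov_sem2 _ _ _ _ Hm Ie). intros va0 vc0. pose proof (E1 (ceval va0 vc0)).
        revert va0 vc0 H. crush. }
    apply (Hr _ _ _ HC2). intros z [<-|Hz]; simpl; auto. apply (HT z Hz).
Qed.

Definition va' (q : nat) : bool :=
  if existsb (Nat.eqb q) (latoms (fst x)) then true
  else if existsb (Nat.eqb q) (latoms (snd x)) then false else va q.
Definition vc' (c d : cform) : bool :=
  if xm (exists S, (forall z, In z S -> PrT z) /\ Cond Ax P S c d) then true else false.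

Lemma lit_l q : In q (latoms (fst x)) -> negb (Nat.eqb q p && negb s) = true -> va q = true.
Proof.
  intros H1 H2. assert (Hz := Hdis (cneg (CAtom q))). simpl in Hz.
  destruct (va q); auto. exfalso. assert (true = false); [apply Hz|discriminate].
  rewrite !in_app_iff; left. apply in_lits. right. eauto.
Qed.
Lemma lit_r q : In q (latoms (snd x)) -> negb (Nat.eqb q p && s) = true -> va q = false.
Proof.
  intros H1 H2. apply (Hdis (CAtom q)). rewrite !in_app_iff; left. apply in_lits. left. eauto.
Qed.
Lemma noboth q : In q (latoms (fst x)) -> In q (latoms (snd x)) -> False.
Proof.
  intros H1 H2. apply Hnp, TC. intros va0 vc0. rewrite clf_eval. unfold ce.
  destruct (forallb _ (fst x)) eqn:EL; simpl; auto.
  apply forallb_gat in EL as [EL1 _]. apply existsb_gat. left. exists q; auto.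
Qed.

Lemma resp_vc' : resp Ax P vc'.
Proof.
  intros S c d HCd Hall. unfold vc'. destruct (xm _) as [_|Hno]; auto. exfalso; apply Hno.
  apply (CondTrans Ax P HP1 HPsum PrT S c d HCd).
  intros y Hy. specialize (Hall y Hy). unfold vc' in Hall. destruct (xm _) as [Hex|]; [exact Hex|discriminate].
Qed.

Lemma Sim_vc' : Sim p s va vc va' vc'.
Proof.
  split; [|split; [|split; [|split]]].
  - intros q Hq. unfold va'. destruct (existsb _ (latoms (fst x))) eqn:E1.
    + symmetry; apply lit_l; [apply existsb_eqb_In; auto|].
      apply Nat.eqb_neq in Hq; rewrite Hq; auto.
    + destruct (existsb _ (latoms (snd x))) eqn:E2; auto.
      symmetry; apply lit_r; [apply existsb_eqb_In; auto|].
      apply Nat.eqb_neq in Hq; rewrite Hq; auto.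
  - intros Hs H. unfold va' in H. destruct (existsb _ (latoms (fst x))) eqn:E1.
    + apply lit_l; [apply existsb_eqb_In; auto|]. rewrite Nat.eqb_refl, Hs; auto.
    + destruct (existsb _ (latoms (snd x))); auto; discriminate.
  - intros Hs H. unfold va'. destruct (existsb _ (latoms (fst x))) eqn:E1; auto.
    destruct (existsb _ (latoms (snd x))) eqn:E2; auto.
    rewrite (lit_r p) in H; auto; [apply existsb_eqb_In; auto|rewrite Nat.eqb_refl, Hs; auto].
  - intros a b Ho Hv. unfold vc'. destruct (xm _) as [_|Hno]; auto. exfalso; apply Hno.
    exists [(a, b)]. split; [|apply Cond_refl; auto].
    intros z [<-|[]]. left. split; auto.
  - intros a b Ho Hv. unfold vc' in Hv. destruct (xm _) as [[S [HS HCd]]|]; [|discriminate].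
    apply (B2 a b S); auto.
Qed.

Lemma ce_vc' : ce va' vc' x = false.
Proof.
  unfold ce. assert (HL : forallb (fun g => ceval va' vc' (gf g)) (fst x) = true).
  { apply forallb_gat. split.
    - intros n Hn. unfold va'. rewrite (proj2 (existsb_eqb_In n _) Hn); auto.
    - intros y Hy. unfold vc'. destruct (xm _) as [_|Hno]; auto. exfalso; apply Hno.
      exists [y]. split; [intros z [<-|[]]; right; auto|]. destruct y; apply Cond_refl; auto. }
  rewrite HL. simpl. destruct (existsb _ (snd x)) eqn:E; auto.
  apply existsb_gat in E as [[n [Hn Hv]]|[y [Hy Hv]]].
  - unfold va' in Hv. destruct (existsb _ (latoms (fst x))) eqn:E1.
    + exfalso; apply (noboth n); auto. apply existsb_eqb_In; auto.
    + rewrite (proj2 (existsb_eqb_In n _) Hn) in Hv; discriminate.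
  - unfold vc' in Hv. destruct (xm _) as [[S [HS HCd]]|]; [|discriminate].
    exfalso; apply (R2b y S); auto.
Qed.

End Cex.

Lemma Q_cex s va vc : resp Ax P vc -> ceval va vc (Q Ax P p fa fe s x) = false ->
  exists va' vc', resp Ax P vc' /\ Sim p s va vc va' vc' /\ ce va' vc' x = false.
Proof.
  intros Hr HQ. unfold Q in HQ. destruct (xm _) as [Hp|Hnp]; [simpl in HQ; discriminate|].
  rewrite bigor_eval in HQ.
  assert (Hdis : forall z, In z (lits p s (fst x) (snd x) ++ ups Ax P fa s (fst x) (snd x) ++
                                 downs Ax P fa fe s (fst x)) -> ceval va vc z = false).
  { intros z Hz. destruct (ceval va vc z) eqn:E; auto.
    rewrite (proj2 (existsb_exists _ _) (ex_intro _ z (conj Hz E))) in HQ; discriminate. }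
  exists (va' va), (vc' s vc). split; [|split].
  - apply resp_vc'.
  - apply Sim_vc'; auto.
  - apply ce_vc'; auto.
Qed.

End Step.


Lemma forallb_false_ex {A} (g : A -> bool) l : forallb g l = false -> exists z, In z l /\ g z = false.
Proof. induction l; simpl; [discriminate|]. destruct (g a) eqn:E; simpl.
  - intros H; destruct (IHl H) as [z [H1 H2]]; eauto.
  - intros _; eauto. Qed.

Section Main.
Variable Ax : cform -> Prop.
Variable P : params.
Variable p : nat.
Notation prov := (cprov Ax).
Hypothesis HP1 : lok P 1 = true.
Hypothesis HPsum : forall lens, lok P (length lens) = true ->
  Forall (fun k => lok P k = true) lens -> lok P (list_sum lens) = true.
Hypothesis HPdown : forall n k, lok P n = true -> 1 <= k -> k <= n -> lok P k = true.
Hypothesis HPnm : mono P = false -> forall n, lok P n = true -> n <= 1.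
Hypothesis HPnmid : mono P = false -> idf P = false.
Hypothesis HAx : forall f, Ax f -> forall va vc, resp Ax P vc -> ceval va vc f = true.
Hypothesis HC : forall S c d, Cond Ax P S c d -> prov (CImp (bigand (map condf S)) (CCond c d)).

Lemma GoodE_of (fa : bool -> cform -> cform) s y :
  GoodA Ax p (negb s) (cneg y) (fa (negb s) (cneg y)) ->
  GoodE Ax p s y (cneg (fa (negb s) (cneg y))).
Proof.
  intros [F [V [I U]]]. split; [|split; [|split]].
  - rewrite cocc_cneg; auto.
  - intros t q Ho. rewrite cocc_cneg in Ho. apply V in Ho. rewrite cocc_cneg, negb_involutive in Ho; auto.
  - apply (prov_sem1 _ _ _ I); crush.
  - intros psi Hf Hp. assert (H : prov (CImp (cneg psi) (fa (negb s) (cneg y)))).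
    { apply U. rewrite cocc_cneg, negb_involutive; auto. apply (prov_sem1 _ _ _ Hp); crush. }
    apply (prov_sem1 _ _ _ H); crush.
Qed.

Lemma ua_good n : forall s f, cdepth f < n -> GoodA Ax p s f (ua Ax P p n s f).
Proof.
  induction n as [|m IH]; intros s f Hd; [lia|].
  set (fa := ua Ax P p m). set (fe := fun t y => cneg (ua Ax P p m (negb t) (cneg y))).
  assert (DA : forall s y, cdepth y < m -> GoodA Ax p s y (fa s y)) by (intros; apply IH; auto).
  assert (DE : forall s y, cdepth y < m -> GoodE Ax p s y (fe s y)).
  { intros s' y Hy. apply GoodE_of. apply IH. simpl. lia. }
  assert (Hfm : cdepth f <= m) by lia.
  destruct (nf_pol f) as [Hpol _]. destruct (nf_dep f) as [Hdp _].
  simpl. fold fa. change (fun t x => cneg (ua Ax P p m (negb t) (cneg x))) with fe.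
  split; [|split; [|split]].
  - rewrite cocc_bigand. destruct (existsb _ _) eqn:E; auto.
    apply existsb_exists in E as [z [Hz E]]. apply in_map_iff in Hz as [x [<- Hx]].
    rewrite (Q_free Ax P p HPnmid fa fe m DA DE f x (Hdp x Hx) Hfm) in E; discriminate.
  - intros t q Ho. rewrite cocc_bigand in Ho.
    apply existsb_exists in Ho as [z [Hz E]]. apply in_map_iff in Hz as [x [<- Hx]].
    apply (Q_vars Ax P p HPnmid fa fe m DA DE f x (Hpol x Hx) (Hdp x Hx) Hfm s t q E).
  - apply (completeness Ax P HP1 HPsum HC). intros va vc Hr. simpl. rewrite bigand_eval.
    destruct (forallb _ _) eqn:E; simpl; auto.
    destruct (nf_eval va vc f) as [E1 _]. rewrite <- E1.
    apply forallb_forall. intros x Hx. rewrite forallb_forall in E.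
    apply (Q_sound Ax P p HP1 HAx fa fe x s va vc Hr).
    apply E, in_map; auto.
  - intros psi Hf Hp. apply (completeness Ax P HP1 HPsum HC). intros va vc Hr. simpl.
    destruct (ceval va vc psi) eqn:Ep; simpl; auto.
    rewrite bigand_eval. apply NNPP; intros Hn. apply not_true_is_false in Hn.
    apply forallb_false_ex in Hn as [z [Hz Ez]].
    apply in_map_iff in Hz as [x [<- Hx]].
    destruct (Q_cex Ax P p HP1 HPsum HPdown HPnm HPnmid HC fa fe m DA DE f x (Hdp x Hx) Hfm s va vc Hr Ez)
      as [va' [vc' [Hr' [Hs Hce]]]].
    pose proof (proj1 (SimEval p s va vc va' vc' Hs psi) Hf Ep) as Ep'.
    pose proof (soundness Ax P HP1 HAx _ Hp va' vc' Hr') as Hs2. simpl in Hs2.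
    rewrite Ep' in Hs2. simpl in Hs2.
    destruct (nf_eval va' vc' f) as [E1 _]. rewrite <- E1 in Hs2.
    rewrite forallb_forall in Hs2. rewrite (Hs2 x Hx) in Hce; discriminate.
Qed.

End Main.


Definition eq1 (n : nat) : bool := Nat.eqb n 1.
Definition ge1 (n : nat) : bool := Nat.leb 1 n.
Definition le1 (n : nat) : bool := Nat.leb n 1.
Definition tt1 (n : nat) : bool := true.
Arguments eq1 : simpl never.
Arguments ge1 : simpl never.
Arguments le1 : simpl never.

Definition Pc (L : cond_logic) : params :=
  match L with
  | LCE => mkP false eq1 false
  | LCM => mkP true eq1 false
  | LCMC => mkP true ge1 false
  | LCEN => mkP false le1 false
  | LCMN => mkP true le1 false
  | LCK => mkP true tt1 false
  | LCKID => mkP true tt1 true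
  end.

Lemma sum_ge1 lens : 1 <= length lens -> Forall (fun k => 1 <= k) lens -> 1 <= list_sum lens.
Proof. destruct lens; simpl; intros H F; [lia|]. inversion F; subst. lia. Qed.
Lemma sum_le1 lens : length lens <= 1 -> Forall (fun k => k <= 1) lens -> list_sum lens <= 1.
Proof. destruct lens as [|a [|b l]]; simpl; intros H F; [lia| |lia]. inversion F; subst. lia. Qed.

Definition lokprops (g : nat -> bool) :=
  g 1 = true /\
  (forall lens, g (length lens) = true -> Forall (fun k => g k = true) lens -> g (list_sum lens) = true) /\
  (forall n k, g n = true -> 1 <= k -> k <= n -> g k = true).

Lemma eq1_props : lokprops eq1.
Proof.
  unfold lokprops, eq1; repeat split.
  - intros lens H F. apply Nat.eqb_eq in H. destruct lens as [|k [|]]; simpl in *; try lia.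
    inversion F; subst. apply Nat.eqb_eq in H2. apply Nat.eqb_eq; lia.
  - intros n k H1 H2 H3. apply Nat.eqb_eq in H1. apply Nat.eqb_eq; lia.
Qed.
Lemma ge1_props : lokprops ge1.
Proof.
  unfold lokprops, ge1; repeat split.
  - intros lens H F. apply Nat.leb_le in H. apply Nat.leb_le, sum_ge1; auto.
    eapply Forall_impl; [|exact F]. intros a Ha; apply Nat.leb_le; auto.
  - intros n k H1 H2 H3. apply Nat.leb_le; lia.
Qed.
Lemma le1_props : lokprops le1.
Proof.
  unfold lokprops, le1; repeat split.
  - intros lens H F. apply Nat.leb_le in H. apply Nat.leb_le, sum_le1; auto.
    eapply Forall_impl; [|exact F]. intros a Ha; apply Nat.leb_le; auto.
  - intros n k H1 H2 H3. apply Nat.leb_le in H1. apply Nat.leb_le; lia.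
Qed.
Lemma tt1_props : lokprops tt1.
Proof. unfold lokprops, tt1; repeat split; auto. Qed.

Lemma Pc_props L :
  lok (Pc L) 1 = true /\
  (forall lens, lok (Pc L) (length lens) = true ->
     Forall (fun k => lok (Pc L) k = true) lens -> lok (Pc L) (list_sum lens) = true) /\
  (forall n k, lok (Pc L) n = true -> 1 <= k -> k <= n -> lok (Pc L) k = true) /\
  (mono (Pc L) = false -> forall n, lok (Pc L) n = true -> n <= 1) /\
  (mono (Pc L) = false -> idf (Pc L) = false).
Proof.
  assert (H1 := eq1_props). assert (H2 := ge1_props). assert (H3 := le1_props). assert (H4 := tt1_props).
  unfold lokprops in *.
  destruct L; simpl; repeat split; try tauto; try discriminate; intros _ n Hn.
  - apply Nat.eqb_eq in Hn; lia.
  - apply Nat.leb_le in Hn; lia.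
Qed.


Section Der.
Variable Ax : cform -> Prop.
Notation prov := (cprov Ax).

Lemma imp_chain a b c : prov (CImp a b) -> prov (CImp b c) -> prov (CImp a c).
Proof. intros H1 H2; apply (prov_sem2 _ _ _ _ H1 H2); crush. Qed.

Lemma iff_refl a : prov (CIff a a).
Proof. apply TC; crush. Qed.

Lemma step1 S c : (forall y, In y S -> prov (CIff (fst y) c)) ->
  prov (CImp (bigand (map condf S)) (bigand (map (CCond c) (map snd S)))).
Proof.
  induction S as [|y S IH]; intros H; simpl.
  - apply TC; crush.
  - assert (H1 : prov (CImp (CCond (fst y) (snd y)) (CCond c (snd y)))).
    { apply cp_re; [apply H; left; auto|apply iff_refl]. }
    assert (H2 := IH (fun z Hz => H z (or_intror Hz))).
    unfold condf at 1. apply (prov_sem2 _ _ _ _ H1 H2); crush.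
Qed.

Lemma agg1 c b : prov (CImp (bigand [CCond c b]) (CCond c (bigand [b]))).
Proof.
  assert (H : prov (CImp (CCond c b) (CCond c (CAnd b CTop)))).
  { apply cp_re; [apply iff_refl|apply TC; crush]. }
  apply (prov_sem1 _ _ _ H); crush.
Qed.

Lemma reRule c X Y : prov (CIff X Y) -> prov (CImp (CCond c X) (CCond c Y)).
Proof. intros H; apply cp_re; auto; apply iff_refl. Qed.

Hypothesis hasCM : forall a b d, Ax (CImp (CCond a (CAnd b d)) (CAnd (CCond a b) (CCond a d))) \/ False.

End Der.

Section Der2.
Variable Ax : cform -> Prop.
Notation prov := (cprov Ax).

Lemma monoRule (hasCM : forall a b d, Ax (CImp (CCond a (CAnd b d)) (CAnd (CCond a b) (CCond a d))))
  c X Y : prov (CImp X Y) -> prov (CImp (CCond c X) (CCond c Y)).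
Proof.
  intros H.
  assert (H1 : prov (CImp (CCond c X) (CCond c (CAnd X Y)))).
  { apply reRule. apply (prov_sem1 _ _ _ H); crush. }
  assert (H2 := cp_ax _ _ (hasCM c X Y)).
  apply (prov_sem2 _ _ _ _ H1 H2); crush.
Qed.

Lemma aggCC (hasCC : forall a b d, Ax (CImp (CAnd (CCond a b) (CCond a d)) (CCond a (CAnd b d))))
  c l : l <> [] -> prov (CImp (bigand (map (CCond c) l)) (CCond c (bigand l))).
Proof.
  induction l as [|b l IH]; intros Hne; [congruence|].
  destruct l as [|b' l'].
  - apply agg1.
  - assert (H1 := IH ltac:(discriminate)).
    assert (H2 := cp_ax _ _ (hasCC c b (bigand (b' :: l')))).
    apply (prov_sem2 _ _ _ _ H1 H2). intros va vc. simpl. revert va vc. crush.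
Qed.

Lemma aggCN (hasCN : forall a, Ax (CCond a CTop)) c :
  prov (CImp (bigand (map (CCond c) [])) (CCond c (bigand []))).
Proof. apply (prov_sem1 _ _ _ (cp_ax _ _ (hasCN c))); crush. Qed.

Lemma idStep (hasCC : forall a b d, Ax (CImp (CAnd (CCond a b) (CCond a d)) (CCond a (CAnd b d))))
  (hasID : forall a, Ax (CCond a a)) c X : prov (CImp (CCond c X) (CCond c (CAnd c X))).
Proof.
  apply (prov_sem2 _ _ _ _ (cp_ax _ _ (hasID c)) (cp_ax _ _ (hasCC c c X))); crush.
Qed.

End Der2.

Section Val.
Variable Ax : cform -> Prop.
Variable P : params.
Notation prov := (cprov Ax).

Lemma val_CM : mono P = true -> lok P 1 = true -> forall a b c va vc, resp Ax P vc ->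
  ceval va vc (CImp (CCond a (CAnd b c)) (CAnd (CCond a b) (CCond a c))) = true.
Proof.
  intros Hm H1 a b c va vc Hr. simpl. destruct (vc a (CAnd b c)) eqn:E; simpl; auto.
  assert (K : forall e, prov (CImp (CAnd (CAnd b c) CTop) e) -> vc a e = true).
  { intros e He. apply (Hr [(a, CAnd b c)]); [|intros y [<-|[]]; auto].
    repeat split; simpl; auto.
    - intros y [<-|[]]; apply TC; crush.
    - apply (prov_sem1 _ _ _ He); crush. }
  rewrite !K; auto; apply TC; crush.
Qed.

Lemma val_CC : mono P = true -> lok P 2 = true -> forall a b c va vc, resp Ax P vc ->
  ceval va vc (CImp (CAnd (CCond a b) (CCond a c)) (CCond a (CAnd b c))) = true.
Proof.
  intros Hm H1 a b c va vc Hr. simpl.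
  destruct (vc a b) eqn:E1, (vc a c) eqn:E2; simpl; auto.
  apply (Hr [(a, b); (a, c)]); [|intros y [<-|[<-|[]]]; auto].
  repeat split; simpl; auto.
  - intros y [<-|[<-|[]]]; apply TC; crush.
  - apply TC; crush.
Qed.

Lemma val_CN : lok P 0 = true -> forall a va vc, resp Ax P vc -> ceval va vc (CCond a CTop) = true.
Proof.
  intros H0 a va vc Hr. simpl. apply (Hr []); [|intros y []].
  repeat split; simpl; auto.
  - intros y [].
  - apply TC; crush.
  - right; apply TC; crush.
Qed.

Lemma val_ID : idf P = true -> lok P 0 = true -> forall a va vc, resp Ax P vc -> ceval va vc (CCond a a) = true.
Proof.
  intros Hi H0 a va vc Hr. simpl. apply (Hr []); [|intros y []].
  repeat split; simpl; auto.
  - intros y [].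
  - unfold guard; rewrite Hi. apply TC; crush.
  - right; apply TC; crush.
Qed.
End Val.

Lemma HAx_L L : forall f, cond_axioms L f -> forall va vc, resp (cond_axioms L) (Pc L) vc -> ceval va vc f = true.
Proof.
  intros f Hf va vc Hr.
  assert (CM : forall f, axCM f -> mono (Pc L) = true -> lok (Pc L) 1 = true -> ceval va vc f = true).
  { intros g [a [b [c ->]]] H1 H2. apply (val_CM (cond_axioms L) (Pc L)); auto. }
  assert (CC : forall f, axCC f -> mono (Pc L) = true -> lok (Pc L) 2 = true -> ceval va vc f = true).
  { intros g [a [b [c ->]]] H1 H2. apply (val_CC (cond_axioms L) (Pc L)); auto. }
  assert (CN : forall f, axCN f -> lok (Pc L) 0 = true -> ceval va vc f = true).
  { intros g [a ->] H1. apply (val_CN (cond_axioms L) (Pc L)); auto. }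
  assert (ID : forall f, axID f -> idf (Pc L) = true -> lok (Pc L) 0 = true -> ceval va vc f = true).
  { intros g [a ->] H1 H2. apply (val_ID (cond_axioms L) (Pc L)); auto. }
  destruct L; simpl in Hf;
    repeat match goal with H : _ \/ _ |- _ => destruct H end; try contradiction;
    first [apply (CM _ H) | apply (CC _ H) | apply (CN _ H) | apply (ID _ H) | apply (CM _ Hf) | apply (CC _ Hf) | apply (CN _ Hf) | apply (ID _ Hf)]; reflexivity.
Qed.

Ltac axt := intros; simpl; unfold axCM, axCC, axCN, axID; solve [eauto 8].

Lemma HC_L L : forall S c d, Cond (cond_axioms L) (Pc L) S c d ->
  cprov (cond_axioms L) (CImp (bigand (map condf S)) (CCond c d)).
Proof.
  intros S c d [Hl [Hf [Hg Hm]]].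
  pose proof (step1 _ S c Hf) as H1.
  set (l := map snd S) in *.
  assert (Hlen : length l = length S) by (unfold l; apply length_map).
  destruct L; simpl in Hl, Hg, Hm; unfold guard in Hg; simpl in Hg;
    try (destruct Hm as [Hm|Hm]; [discriminate|]); apply (imp_chain _ _ _ _ H1).
  - unfold eq1 in Hl. apply Nat.eqb_eq in Hl.
    destruct l as [|b [|]]; simpl in Hlen; try lia.
    apply (imp_chain _ _ _ _ (agg1 _ c b)).
    apply reRule. apply (prov_sem2 _ _ _ _ Hg Hm); crush.
  - unfold eq1 in Hl. apply Nat.eqb_eq in Hl.
    destruct l as [|b [|]]; simpl in Hlen; try lia.
    apply (imp_chain _ _ _ _ (agg1 _ c b)).
    apply monoRule; auto. axt.
  - unfold ge1 in Hl. apply Nat.leb_le in Hl.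
    apply (imp_chain _ _ _ _ (aggCC (cond_axioms LCMC) ltac:(axt) c l ltac:(destruct l; simpl in *; [lia|discriminate]))).
    apply monoRule; auto. axt.
  - unfold le1 in Hl. apply Nat.leb_le in Hl.
    destruct l as [|b [|]]; simpl in Hlen; try lia.
    + apply (imp_chain _ _ _ _ (aggCN (cond_axioms LCEN) ltac:(axt) c)).
      apply reRule. apply (prov_sem2 _ _ _ _ Hg Hm); crush.
    + apply (imp_chain _ _ _ _ (agg1 _ c b)).
      apply reRule. apply (prov_sem2 _ _ _ _ Hg Hm); crush.
  - unfold le1 in Hl. apply Nat.leb_le in Hl.
    destruct l as [|b [|]]; simpl in Hlen; try lia.
    + apply (imp_chain _ _ _ _ (aggCN (cond_axioms LCMN) ltac:(axt) c)). apply monoRule; auto. axt.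
    + apply (imp_chain _ _ _ _ (agg1 _ c b)). apply monoRule; auto. axt.
  - destruct l as [|b l'].
    + apply (imp_chain _ _ _ _ (aggCN (cond_axioms LCK) ltac:(axt) c)). apply monoRule; auto. axt.
    + apply (imp_chain _ _ _ _ (aggCC (cond_axioms LCK) ltac:(axt) c (b :: l') ltac:(discriminate))).
      apply monoRule; auto. axt.
  -
    assert (Hagg : cprov (cond_axioms LCKID) (CImp (bigand (map (CCond c) l)) (CCond c (bigand l)))).
    { destruct l as [|b l'].
      - apply (aggCN (cond_axioms LCKID) ltac:(axt) c).
      - apply (aggCC (cond_axioms LCKID) ltac:(axt) c (b :: l') ltac:(discriminate)). }
    apply (imp_chain _ _ _ _ Hagg). apply (imp_chain _ _ _ _ (idStep (cond_axioms LCKID) ltac:(axt) ltac:(axt) c _)).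
    apply monoRule; auto. axt.
Qed.

Theorem ULIP_cond L : ULIP_c (ctheorems L).
Proof.
  destruct (Pc_props L) as [HP1 [HPsum [HPdown [HPnm HPnmid]]]].
  pose proof (HAx_L L) as HAx. pose proof (HC_L L) as HC.
  unfold ULIP_c, ULIP_gen, ctheorems. intros phi p s. split.
  - exists (ua (cond_axioms L) (Pc L) p (S (cdepth phi)) s phi).
    apply (ua_good (cond_axioms L) (Pc L) p HP1 HPsum HPdown HPnm HPnmid HAx HC); lia.
  - exists (cneg (ua (cond_axioms L) (Pc L) p (S (cdepth phi)) (negb s) (cneg phi))).
    apply (GoodE_of (cond_axioms L) (Pc L) p HP1). apply (ua_good (cond_axioms L) (Pc L) p HP1 HPsum HPdown HPnm HPnmid HAx HC).
    simpl; lia.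
Qed.


Section Gen.
Variable F : Type.
Variable imp : F -> F -> F.
Variable occ : bool -> nat -> F -> bool.
Variable L : F -> Prop.
Hypothesis Htr : forall a b c, L (imp a b) -> L (imp b c) -> L (imp a c).
Hypothesis Hrefl : forall a, L (imp a a).
Hypothesis Hvl : forall phi, exists l, forall t q, occ t q phi = true -> In q l.
Hypothesis HU : ULIP_gen imp occ L.

Lemma UIP_of : UIP_gen imp occ L.
Proof.
  intros phi p. split.
  - destruct (HU phi p false) as [[A1 [F1 [V1 [I1 U1]]]] _].
    destruct (HU A1 p true) as [[A2 [F2 [V2 [I2 U2]]]] _].
    exists A2. unfold vars. split; [|split; [|split]].
    + rewrite F2. simpl. destruct (occ false p A2) eqn:E; auto. apply V2 in E. congruence.
    + intros q Hq. apply orb_true_iff in Hq as [Hq|Hq]; apply V2, V1 in Hq; rewrite Hq; auto with bool.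
    + eauto.
    + intros psi Hf Hp. apply orb_false_iff in Hf as [Hf1 Hf2]. apply U2; auto.
  - destruct (HU phi p false) as [_ [A1 [F1 [V1 [I1 U1]]]]].
    destruct (HU A1 p true) as [_ [A2 [F2 [V2 [I2 U2]]]]].
    exists A2. unfold vars. split; [|split; [|split]].
    + rewrite F2. simpl. destruct (occ false p A2) eqn:E; auto. apply V2 in E. congruence.
    + intros q Hq. apply orb_true_iff in Hq as [Hq|Hq]; apply V2, V1 in Hq; rewrite Hq; auto with bool.
    + eauto.
    + intros psi Hf Hp. apply orb_false_iff in Hf as [Hf1 Hf2]. apply U2; auto.
Qed.

Lemma LIP_aux phi psi : L (imp phi psi) -> forall ps : list (bool * nat),
  exists th, L (imp phi th) /\ L (imp th psi) /\ (forall t q, occ t q th = true -> occ t q phi = true) /\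
    (forall t q, In (t, q) ps -> occ t q psi = false -> occ t q th = false).
Proof.
  intros H. induction ps as [|[t0 q0] ps IH].
  - exists phi; repeat split; auto. intros t q [].
  - destruct IH as [th [H1 [H2 [H3 H4]]]].
    destruct (occ t0 q0 psi) eqn:Eo.
    + exists th; repeat split; auto. intros t q [E|Hin] Ho; [inversion E; subst; congruence|auto].
    + destruct (HU th q0 t0) as [_ [E [F1 [V1 [I1 U1]]]]].
      exists E; repeat split; eauto.
      intros t q [Eq|Hin] Ho; [inversion Eq; subst; auto|].
      destruct (occ t q E) eqn:Ee; auto. apply V1 in Ee. rewrite (H4 t q Hin Ho) in Ee; auto.
Qed.

Lemma LIP_of : LIP_gen imp occ L.
Proof.
  intros phi psi H. destruct (Hvl phi) as [l Hl].
  destruct (LIP_aux phi psi H (flat_map (fun q => [(true, q); (false, q)]) l)) as [th [H1 [H2 [H3 H4]]]].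
  exists th; split; [|split; auto].
  intros t q Ho. split; auto.
  destruct (occ t q psi) eqn:E; auto.
  rewrite (H4 t q) in Ho; auto.
  apply in_flat_map. exists q; split; [apply (Hl t q); auto|]. destruct t; simpl; auto.
Qed.
End Gen.


Fixpoint tau (f : mform) : cform :=
  match f with
  | MAtom n => CAtom n | MBot => CBot
  | MAnd a b => CAnd (tau a) (tau b) | MOr a b => COr (tau a) (tau b)
  | MImp a b => CImp (tau a) (tau b) | MBox a => CCond CBot (tau a)
  end.
Fixpoint beta (f : cform) : mform :=
  match f with
  | CAtom n => MAtom n | CBot => MBot
  | CAnd a b => MAnd (beta a) (beta b) | COr a b => MOr (beta a) (beta b)
  | CImp a b => MImp (beta a) (beta b) | CCond a b => MBox (beta b)
  end.

Lemma beta_tau f : beta (tau f) = f.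
Proof. induction f; simpl; congruence. Qed.
Lemma occ_tau t q f : cocc t q (tau f) = mocc t q f.
Proof. revert t; induction f; intros t; simpl; try rewrite IHf1, IHf2; auto. Qed.
Lemma occ_beta t q f : mocc t q (beta f) = true -> cocc t q f = true.
Proof. revert t; induction f; intros t; simpl; auto; try (rewrite !orb_true_iff; intuition). Qed.
Lemma tau_subst sg t : tau (msubst sg t) = csubst (fun n => tau (sg n)) t.
Proof. induction t; simpl; congruence. Qed.
Lemma beta_subst sg t : beta (csubst sg t) = msubst (fun n => beta (sg n)) t.
Proof. induction t; simpl; congruence. Qed.

Definition Lmap (L : modal_logic) : cond_logic :=
  match L with LE => LCE | LM => LCM | LMC => LCMC | LEN => LCEN | LMN => LCMN | LK => LCK end.

Definition s3 (a b c : mform) (n : nat) : mform := match n with 0 => a | 1 => b | _ => c end.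

Lemma m_trans Ax a b c : mprov Ax (MImp a b) -> mprov Ax (MImp b c) -> mprov Ax (MImp a c).
Proof.
  intros H1 H2.
  assert (T : mprov Ax (msubst (s3 a b c) (PImp (PImp (PAtom 0) (PAtom 1))
      (PImp (PImp (PAtom 1) (PAtom 2)) (PImp (PAtom 0) (PAtom 2)))))).
  { apply mp_taut. intros v; simpl. destruct (v 0), (v 1), (v 2); reflexivity. }
  simpl in T. exact (mp_mp _ _ _ (mp_mp _ _ _ T H1) H2).
Qed.
Lemma m_refl Ax a : mprov Ax (MImp a a).
Proof.
  assert (T : mprov Ax (msubst (s3 a a a) (PImp (PAtom 0) (PAtom 0)))).
  { apply mp_taut. intros v; simpl. destruct (v 0); reflexivity. }
  exact T.
Qed.
Lemma m_iffimp Ax a b : mprov Ax (MIff a b) -> mprov Ax (MImp a b).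
Proof.
  intros H.
  assert (T : mprov Ax (msubst (s3 a b b) (PImp (PAnd (PImp (PAtom 0) (PAtom 1)) (PImp (PAtom 1) (PAtom 0)))
      (PImp (PAtom 0) (PAtom 1))))).
  { apply mp_taut. intros v; simpl. destruct (v 0), (v 1); reflexivity. }
  exact (mp_mp _ _ _ T H).
Qed.

Lemma tau_prov L f : mtheorems L f -> ctheorems (Lmap L) (tau f).
Proof.
  unfold mtheorems, ctheorems. induction 1.
  - rewrite tau_subst. apply cp_taut; auto.
  - apply cp_ax. destruct L; simpl in *;
      repeat match goal with
             | H : _ \/ _ |- _ => destruct H
             | H : axM _ |- _ => destruct H as [a [b ->]]
             | H : axC _ |- _ => destruct H as [a [b ->]]
             | H : axN _ |- _ => rewrite H
             end; try contradiction; simpl; unfold axCM, axCC, axCN; eauto 8.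
  - simpl in IHmprov1. exact (cp_mp _ _ _ IHmprov1 IHmprov2).
  - simpl in *. fold (CIff (tau f) (tau g)) in IHmprov.
    assert (H1 := cp_re _ _ _ _ _ (iff_refl _ CBot) IHmprov).
    assert (H2 : cprov (cond_axioms (Lmap L)) (CIff (tau g) (tau f))).
    { apply (prov_sem1 _ _ _ IHmprov); crush. }
    assert (H3 := cp_re _ _ _ _ _ (iff_refl _ CBot) H2).
    apply (prov_sem2 _ _ _ _ H1 H3); crush.
Qed.

Lemma beta_prov L X : ctheorems (Lmap L) X -> mtheorems L (beta X).
Proof.
  unfold mtheorems, ctheorems. induction 1.
  - rewrite beta_subst. apply mp_taut; auto.
  - apply mp_ax. destruct L; simpl in *;
      repeat match goal with
             | H : _ \/ _ |- _ => destruct H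
             | H : axCM _ |- _ => destruct H as [a [b [c ->]]]
             | H : axCC _ |- _ => destruct H as [a [b [c ->]]]
             | H : axCN _ |- _ => destruct H as [a ->]
             end; try contradiction; simpl; unfold axM, axC, axN; eauto 8.
  - simpl in IHcprov1. exact (mp_mp _ _ _ IHcprov1 IHcprov2).
  - simpl in *. apply m_iffimp. apply mp_re. exact IHcprov2.
Qed.

Theorem ULIP_modal L : ULIP_m (mtheorems L).
Proof.
  intros phi p s. destruct (ULIP_cond (Lmap L) (tau phi) p s) as [[A [F1 [V1 [I1 U1]]]] [E [F2 [V2 [I2 U2]]]]].
  split.
  - exists (beta A). split; [|split; [|split]].
    + destruct (mocc s p (beta A)) eqn:Eo; auto. apply occ_beta in Eo; congruence.
    + intros t q Ho. apply occ_beta, V1 in Ho. rewrite occ_tau in Ho; auto.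
    + apply beta_prov in I1. simpl in I1. rewrite beta_tau in I1; auto.
    + intros psi Hf Hp. apply tau_prov in Hp. simpl in Hp.
      apply U1 in Hp; [|rewrite occ_tau; auto].
      apply beta_prov in Hp. simpl in Hp. rewrite beta_tau in Hp; auto.
  - exists (beta E). split; [|split; [|split]].
    + destruct (mocc s p (beta E)) eqn:Eo; auto. apply occ_beta in Eo; congruence.
    + intros t q Ho. apply occ_beta, V2 in Ho. rewrite occ_tau in Ho; auto.
    + apply beta_prov in I2. simpl in I2. rewrite beta_tau in I2; auto.
    + intros psi Hf Hp. apply tau_prov in Hp. simpl in Hp.
      apply U2 in Hp; [|rewrite occ_tau; auto].
      apply beta_prov in Hp. simpl in Hp. rewrite beta_tau in Hp; auto.
Qed.

Fixpoint matoms (f : mform) : list nat :=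
  match f with
  | MAtom n => [n] | MBot => []
  | MAnd a b | MOr a b | MImp a b => matoms a ++ matoms b
  | MBox a => matoms a
  end.
Lemma matoms_occ f : forall t q, mocc t q f = true -> In q (matoms f).
Proof.
  induction f; intros t q H; simpl in *; try discriminate;
    try (apply orb_true_iff in H as [H|H]; apply in_or_app; eauto).
  - apply andb_true_iff in H as [_ H]; apply Nat.eqb_eq in H; auto.
  - eauto.
Qed.
Fixpoint catoms (f : cform) : list nat :=
  match f with
  | CAtom n => [n] | CBot => []
  | CAnd a b | COr a b | CImp a b | CCond a b => catoms a ++ catoms b
  end.
Lemma catoms_occ f : forall t q, cocc t q f = true -> In q (catoms f).
Proof.
  induction f; intros t q H; simpl in *; try discriminate;
    try (apply orb_true_iff in H as [H|H]; apply in_or_app; eauto).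
  apply andb_true_iff in H as [_ H]; apply Nat.eqb_eq in H; auto.
Qed.

Theorem mainTheorem8 :
  (forall L : modal_logic,
      ULIP_m (mtheorems L) /\ UIP_m (mtheorems L) /\ LIP_m (mtheorems L)) /\
  (forall L : cond_logic,
      ULIP_c (ctheorems L) /\ UIP_c (ctheorems L) /\ LIP_c (ctheorems L)).
Proof.
  split; intros L.
  - pose proof (ULIP_modal L) as HU. split; [auto|split].
    + apply UIP_of; auto. apply m_trans.
    + apply LIP_of; auto.
      * apply m_trans.
      * apply m_refl.
      * intros phi; exists (matoms phi); apply matoms_occ.
  - pose proof (ULIP_cond L) as HU. split; [auto|split].
    + apply UIP_of; auto. intros a b c; apply imp_chain.
    + apply LIP_of; auto.
      * intros a b c; apply imp_chain.
      * intros a; apply TC; crush.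
      * intros phi; exists (catoms phi); apply catoms_occ.
Qed.
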